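(* Let $\Gamma_1$ be a represented pointclass, let $\Gamma_2$ be the closure of $\Gamma_1$ under finite unions, rescaling, and union with clopen sets (with the induced representation), and let $\Gamma=\Gamma_2\cup\overline{\Gamma_2}$; assume $\Gamma_1$ and $\Gamma$ satisfy the standing assumptions. Then $\mathrm{FindWS}_{\Gamma_1}^*\times\mathrm{Win}_{\Gamma_1}^*\leq_W\mathrm{NE}^{ap}_\Gamma$.
   Context: $f\leq_W g$ iff there are computable partial $K,H$ on $\mathbb{N}^\mathbb{N}$ such that for every realizer $G$ of $g$, $p\mapsto K(\langle p,G(H(p))\rangle)$ realizes $f$. $\times$ is the product; $f^*$: $f^0=\mathrm{id}$, $f^{n+1}=f\times f^n$, $f^*(n,x)=f^n(x)$. Rescaling: $(w,A)\mapsto\{wp\mid p\in A\}$. $\overline{\Delta}=\{U^C\mid U\in\Delta\}$; a union of represented classes is named by a tag and a name in the respective class. Games: infinite sequential games with choices $\{0,1\}$, players, turn function $d:\{0,1\}^*\to A$, outcomes $O$, valuation $v$, preferences with well-founded inverses; strategy profiles $s:\{0,1\}^*\to\{0,1\}$; induced play $p_n=s(p_{<n})$; Nash equilibrium: no player can unilaterally switch strategy to get a strictly preferred outcome. Named by numbers of players/outcomes, $d$ and preferences as tables, and for each player $a$ and upper set $U$ w.r.t. $\prec_a$ a $\Gamma$-name of $v^{-1}(U)$. Win/lose games: two players, outcomes $w_1,w_2$, player $i$ prefers $w_i$. $\mathrm{Win}_\Delta$: input a win/lose game with player-1 winning set given by a $\Delta$-name; output which player has a winning strategy. $\mathrm{FindWS}_\Delta$: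 same input restricted to games where player 1 has a winning strategy; output a profile in which one strategy is winning. $\mathrm{NE}^{ap}_\Gamma$: input a two-player game with finitely many outcomes and linear antagonistic preferences; output a Nash equilibrium. Standing assumptions on a pointclass: determinacy of its win/lose games; contains $\emptyset,\{0,1\}^\mathbb{N}$; uniformly computable closure under rescaling and its inverse and intersection with clopens. *)

(* Defs.v *)
From Stdlib Require Import Arith List Bool.
Import ListNotations.

Definition baire := nat -> nat.
Definition cantor := nat -> bool.
Definition word := list bool.

Inductive code : Type :=
| cZero
| cSucc
| cProj (i : nat)
| cOrac                          (* the oracle applied to the first argument *)
| cComp (f : code) (gs : list code)
| cRec (f g : code)
| cMu (f : code).

Inductive ev (p : baire) : code -> list nat -> nat -> Prop :=
| ev_zero v : ev p cZero v 0
| ev_succ v : ev p cSucc v (S (nth 0 v 0))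
| ev_proj i v : ev p (cProj i) v (nth i v 0)
| ev_orac v : ev p cOrac v (p (nth 0 v 0))
| ev_comp f gs v ys y : evs p gs v ys -> ev p f ys y -> ev p (cComp f gs) v y
| ev_rec0 f g v y : ev p f v y -> ev p (cRec f g) (0 :: v) y
| ev_recS f g n v r y :
    ev p (cRec f g) (n :: v) r -> ev p g (n :: r :: v) y -> ev p (cRec f g) (S n :: v) y
| ev_mu f v n :
    ev p f (n :: v) 0 -> (forall m, m < n -> exists k, ev p f (m :: v) (S k)) ->
    ev p (cMu f) v n
with evs (p : baire) : list code -> list nat -> list nat -> Prop :=
| evs_nil v : evs p nil v nil
| evs_cons g gs v y ys : ev p g v y -> evs p gs v ys -> evs p (g :: gs) v (y :: ys).

(** [Phi e p q]: the partial computable function on Baire space with code [e]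
    is defined on [p] with value [q]. *)
Definition Phi (e : code) (p q : baire) : Prop := forall n, ev p e [n] (q n).

Definition pair_nat (i n : nat) : nat := 2 ^ i * (2 * n + 1) - 1.
Definition comp (i : nat) (p : baire) : baire := fun n => p (pair_nat i n).
Definition bpair (p q : baire) : baire :=
  fun n => if Nat.even n then p (Nat.div2 n) else q (Nat.div2 n).
Definition bfst (r : baire) : baire := fun n => r (2 * n).
Definition bsnd (r : baire) : baire := fun n => r (2 * n + 1).
Definition btail (p : baire) : baire := fun n => p (S n).

(** bijective coding of words {0,1}^* by naturals *)
Fixpoint wcode (w : word) : nat :=
  match w with
  | nil => 0
  | b :: w' => 2 * wcode w' + (if b then 2 else 1)
  end.

Definition app_word (w : word) (y : cantor) : cantor :=
  fun n => if n <? length w then nth n w false else y (n - length w).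

Definition prefix_of (w : word) (x : cantor) : Prop :=
  forall i, i < length w -> nth i w false = x i.

(** A clopen set named by c: c 0 = number of cylinders, c (S i) = code of the i-th word;
    it denotes the union of the cylinders. *)
Definition clopen_den (c : baire) (x : cantor) : Prop :=
  exists i, i < c 0 /\ exists w, wcode w = c (S i) /\ prefix_of w x.

(** * Represented pointclasses: a partial map from Baire space onto subsets of Cantor space *)
Record rpc := RPC {
  rnames : baire -> Prop;              (* domain of the representation *)
  rdenot : baire -> cantor -> Prop
}.

Definition seteq (A B : cantor -> Prop) : Prop := forall x, A x <-> B x.

Definition profile := word -> bool.

Fixpoint hist (s : profile) (n : nat) : word :=
  match n with
  | 0 => nil
  | S m => hist s m ++ [s (hist s m)]
  end.
Definition play (s : profile) : cantor := fun n => s (hist s n).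

(** Win/lose games: players 0 ("player 1") and 1 ("player 2"), turn function d,
    W = winning set of player 0. *)
Definition wins (a : nat) (W : cantor -> Prop) (x : cantor) : Prop :=
  match a with 0 => W x | _ => ~ W x end.

Definition strat_winning (d : word -> nat) (W : cantor -> Prop) (a : nat) (s : profile) : Prop :=
  forall s' : profile, (forall w, d w = a -> s' w = s w) -> wins a W (play s').

Definition has_ws (d : word -> nat) (W : cantor -> Prop) (a : nat) : Prop :=
  exists s, strat_winning d W a s.

Record game := Game {
  gpl : nat;
  gout : nat;
  gturn : word -> nat;
  gpref : nat -> nat -> nat -> Prop;  (* gpref a o o' : o ≺_a o' (o' strictly preferred) *)
  gval : cantor -> nat
}.

Definition nash (G : game) (s : profile) : Prop :=
  forall a, a < gpl G ->
  forall s' : profile, (forall w, gturn G w <> a -> s' w = s w) ->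
  ~ gpref G a (gval G (play s)) (gval G (play s')).

(** subsets of the outcomes {0..k-1} coded as bitmasks s < 2^k *)
Definition upper_set (R : nat -> nat -> Prop) (k s : nat) : Prop :=
  forall o o', o < k -> o' < k -> Nat.testbit s o = true -> R o o' -> Nat.testbit s o' = true.

(** Naming of games w.r.t. a represented pointclass Gam:
    component 0: number of players, 1: number of outcomes, 2: table of d,
    3: preference tables, 4 + <a,s>: a Gam-name of v^{-1}(U_s) for each
    player a and each upper set U_s w.r.t. ≺_a. *)
Definition names_game (Gam : rpc) (p : baire) (G : game) : Prop :=
  comp 0 p 0 = gpl G /\
  comp 1 p 0 = gout G /\
  (forall w, gturn G w < gpl G) /\
  (forall x, gval G x < gout G) /\
  (forall w, comp 2 p (wcode w) = gturn G w) /\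
  (forall a o o', a < gpl G -> o < gout G -> o' < gout G ->
     (gpref G a o o' <-> comp 3 p (pair_nat a (pair_nat o o')) = 1)) /\
  (forall a s, a < gpl G -> s < 2 ^ gout G -> upper_set (gpref G a) (gout G) s ->
     rnames Gam (comp (4 + pair_nat a s) p) /\
     seteq (rdenot Gam (comp (4 + pair_nat a s) p)) (fun x => Nat.testbit s (gval G x) = true)).

(** two players, linear antagonistic preferences *)
Definition ap_game (G : game) : Prop :=
  gpl G = 2 /\
  (forall o, o < gout G -> ~ gpref G 0 o o) /\
  (forall o1 o2 o3, o1 < gout G -> o2 < gout G -> o3 < gout G ->
     gpref G 0 o1 o2 -> gpref G 0 o2 o3 -> gpref G 0 o1 o3) /\
  (forall o o', o < gout G -> o' < gout G -> o <> o' -> gpref G 0 o o' \/ gpref G 0 o' o) /\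
  (forall o o', o < gout G -> o' < gout G -> (gpref G 1 o o' <-> gpref G 0 o' o)).

Definition names_profile (q : baire) (s : profile) : Prop :=
  forall w, q (wcode w) = (if s w then 1 else 0).

Record problem := Problem {
  pdom : baire -> Prop;
  psol : baire -> baire -> Prop
}.

Definition realizer (P : problem) (G : baire -> baire) : Prop :=
  forall p, pdom P p -> psol P p (G p).

Definition weihrauch_le (f g : problem) : Prop :=
  exists eH eK : code,
  forall G, realizer g G ->
  forall p, pdom f p ->
  exists h, Phi eH p h /\ pdom g h /\
  exists k, Phi eK (bpair p (G h)) k /\ psol f p k.

Definition prod_problem (f g : problem) : problem :=
  Problem (fun r => pdom f (bfst r) /\ pdom g (bsnd r))
          (fun r s => psol f (bfst r) (bfst s) /\ psol g (bsnd r) (bsnd s)).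

(** identity on a one-point space *)
Definition id_problem : problem := Problem (fun _ => True) (fun _ _ => True).

Fixpoint power_problem (f : problem) (n : nat) : problem :=
  match n with
  | 0 => id_problem
  | S m => prod_problem f (power_problem f m)
  end.

(** f^*: input (n, x) named by p with p 0 = n and tail naming x in X^n *)
Definition star_problem (f : problem) : problem :=
  Problem (fun p => pdom (power_problem f (p 0)) (btail p))
          (fun p q => psol (power_problem f (p 0)) (btail p) q).

(** input name: component 0 = table of d (values in {0,1}), component 1 = Delta-name of W *)
Definition wl_turn (p : baire) : word -> nat := fun w => comp 0 p (wcode w).

Definition wl_dom (Delta : rpc) (p : baire) : Prop :=
  (forall w, wl_turn p w <= 1) /\ rnames Delta (comp 1 p).

Definition Win (Delta : rpc) : problem :=
  Problem (wl_dom Delta)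
    (fun p q => (q 0 = 0 /\ has_ws (wl_turn p) (rdenot Delta (comp 1 p)) 0) \/
                (q 0 = 1 /\ has_ws (wl_turn p) (rdenot Delta (comp 1 p)) 1)).

Definition FindWS (Delta : rpc) : problem :=
  Problem (fun p => wl_dom Delta p /\ has_ws (wl_turn p) (rdenot Delta (comp 1 p)) 0)
    (fun p q => exists s, names_profile q s /\
       exists a, a <= 1 /\ strat_winning (wl_turn p) (rdenot Delta (comp 1 p)) a s).

Definition NEap (Gam : rpc) : problem :=
  Problem (fun p => exists G, names_game Gam p G /\ ap_game G)
    (fun p q => exists s, names_profile q s /\
       forall G, names_game Gam p G -> ap_game G -> nash G s).

Definition standing (Delta : rpc) : Prop :=
  (forall p, rnames Delta p -> forall d : word -> nat, (forall w, d w <= 1) ->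
     has_ws d (rdenot Delta p) 0 \/ has_ws d (rdenot Delta p) 1) /\
  (exists p, rnames Delta p /\ seteq (rdenot Delta p) (fun _ => False)) /\
  (exists p, rnames Delta p /\ seteq (rdenot Delta p) (fun _ => True)) /\
  (* uniformly computable closure under rescaling (w, A) |-> wA;
     a word w is named by any r with r 0 = code w *)
  (exists e, forall w r p, r 0 = wcode w -> rnames Delta p ->
     exists q, Phi e (bpair r p) q /\ rnames Delta q /\
       seteq (rdenot Delta q) (fun x => exists y, rdenot Delta p y /\ forall n, x n = app_word w y n)) /\
  (exists e, forall w r p, r 0 = wcode w -> rnames Delta p ->
     exists q, Phi e (bpair r p) q /\ rnames Delta q /\
       seteq (rdenot Delta q) (fun y => rdenot Delta p (app_word w y))) /\
  (exists e, forall c p, rnames Delta p ->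
     exists q, Phi e (bpair c p) q /\ rnames Delta q /\
       seteq (rdenot Delta q) (fun x => clopen_den c x /\ rdenot Delta p x)).

(** Name p: component 0 = clopen C, component 1 = (n, codes of words w_0..w_{n-1}),
    component 2+i = Gamma_1-name of A_i; denotes C ∪ ⋃_{i<n} w_i A_i. *)
Definition closure_G2 (G1 : rpc) : rpc :=
  RPC (fun p => forall i, i < comp 1 p 0 -> rnames G1 (comp (2 + i) p))
      (fun p x => clopen_den (comp 0 p) x \/
         exists i, i < comp 1 p 0 /\ exists w, wcode w = comp 1 p (S i) /\
           exists y, rdenot G1 (comp (2 + i) p) y /\ forall n, x n = app_word w y n).

Definition co_class (D : rpc) : rpc :=
  RPC (rnames D) (fun p x => ~ rdenot D p x).

Definition union_class (D1 D2 : rpc) : rpc :=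
  RPC (fun p => (p 0 = 0 /\ rnames D1 (btail p)) \/ (p 0 = 1 /\ rnames D2 (btail p)))
      (fun p x => if p 0 =? 0 then rdenot D1 (btail p) x else rdenot D2 (btail p) x).

(* Main.v *)
Require Import Defs.
From Stdlib Require Import Arith List Bool Lia PeanoNat FunctionalExtensionality Classical ClassicalEpsilon.
Import ListNotations.

Definition computes (c : code) (F : baire -> list nat -> nat) :=
  forall p v, ev p c v (F p v).
Definition computesl (cs : list code) (F : baire -> list nat -> list nat) :=
  forall p v, evs p cs v (F p v).

Lemma computes_ext c F G : computes c F -> (forall p v, F p v = G p v) -> computes c G.
Proof. intros H E p v. rewrite <- E. apply H. Qed.

Lemma cl_nil : computesl [] (fun _ _ => []).
Proof. intros p v. constructor. Qed.
Lemma cl_cons c cs F Fs : computes c F -> computesl cs Fs ->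
  computesl (c::cs) (fun p v => F p v :: Fs p v).
Proof. intros H1 H2 p v. constructor; auto. Qed.

Lemma c_comp f gs F Gs : computes f F -> computesl gs Gs ->
  computes (cComp f gs) (fun p v => F p (Gs p v)).
Proof. intros H1 H2 p v. econstructor; eauto. Qed.

Lemma c_proj i : computes (cProj i) (fun p v => nth i v 0).
Proof. intros p v. constructor. Qed.

Lemma c_orac1 : computes cOrac (fun p v => p (nth 0 v 0)).
Proof. intros p v. constructor. Qed.

Lemma c_orac a A : computes a A -> computes (cComp cOrac [a]) (fun p v => p (A p v)).
Proof. intros H. apply (c_comp cOrac [a] (fun p v => p (nth 0 v 0)) (fun p v => [A p v])).
  apply c_orac1. apply cl_cons; [auto|apply cl_nil]. Qed.

Lemma ev_rec_gen p f g F G n v : computes f F -> computes g G ->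
  ev p (cRec f g) (n::v) (nat_rect (fun _ => nat) (F p v) (fun k r => G p (k::r::v)) n).
Proof. intros Hf Hg. induction n; simpl. constructor; apply Hf.
  econstructor. apply IHn. apply Hg. Qed.

Lemma c_rec f g F G cn N cs Cs : computes f F -> computes g G -> computes cn N ->
  computesl cs Cs ->
  computes (cComp (cRec f g) (cn::cs))
    (fun p v => nat_rect (fun _ => nat) (F p (Cs p v)) (fun k r => G p (k::r::Cs p v)) (N p v)).
Proof. intros Hf Hg Hn Hs p v. econstructor. constructor. apply Hn. apply Hs.
  apply ev_rec_gen; auto. Qed.

Fixpoint ccst (k : nat) : code := match k with 0 => cZero | S k => cComp cSucc [ccst k] end.
Lemma c_cst k : computes (ccst k) (fun _ _ => k).
Proof. induction k; intros p v; simpl. constructor.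
  econstructor. constructor. apply IHk. constructor. constructor. Qed.

Lemma lift1 (f : nat -> nat) c a A : computes c (fun p v => f (nth 0 v 0)) -> computes a A ->
  computes (cComp c [a]) (fun p v => f (A p v)).
Proof. intros H Ha. apply (c_comp c [a] (fun p v => f (nth 0 v 0)) (fun p v => [A p v])). apply H.
  apply cl_cons; [auto|apply cl_nil]. Qed.
Lemma lift2 (f : nat -> nat -> nat) c a A b B :
  computes c (fun p v => f (nth 0 v 0) (nth 1 v 0)) -> computes a A -> computes b B ->
  computes (cComp c [a;b]) (fun p v => f (A p v) (B p v)).
Proof. intros H Ha Hb. apply (c_comp c [a;b] (fun p v => f (nth 0 v 0) (nth 1 v 0)) (fun p v => [A p v; B p v])). apply H.
  repeat apply cl_cons; auto. apply cl_nil. Qed.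
Lemma lift3 (f : nat -> nat -> nat -> nat) c a A b B d D :
  computes c (fun p v => f (nth 0 v 0) (nth 1 v 0) (nth 2 v 0)) -> computes a A -> computes b B -> computes d D ->
  computes (cComp c [a;b;d]) (fun p v => f (A p v) (B p v) (D p v)).
Proof. intros H Ha Hb Hd. apply (c_comp c [a;b;d] (fun p v => f (nth 0 v 0) (nth 1 v 0) (nth 2 v 0)) (fun p v => [A p v; B p v; D p v])). apply H.
  repeat apply cl_cons; auto. apply cl_nil. Qed.

Definition P0 := cProj 0. Definition P1 := cProj 1. Definition P2 := cProj 2. Definition P3 := cProj 3.

Definition K_add := cComp (cRec (cProj 0) (cComp cSucc [cProj 1])) [P0;P1].
Lemma k_add : computes K_add (fun p v => nth 0 v 0 + nth 1 v 0).
Proof.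
  eapply computes_ext.
  - apply (c_rec _ _ (fun p v => nth 0 v 0) (fun p w => S (nth 1 w 0)) _ (fun p v => nth 0 v 0) _ (fun p v => [nth 1 v 0])).
    apply c_proj. apply (lift1 S). intros p v; constructor. apply c_proj.
    apply c_proj. apply cl_cons. apply c_proj. apply cl_nil.
  - intros p v. simpl. induction (nth 0 v 0); simpl; auto.
Qed.

Fixpoint projs_from (i a : nat) : list code :=
  match a with 0 => [] | S a => cProj i :: projs_from (S i) a end.
Lemma c_projs i a : computesl (projs_from i a) (fun p w => map (fun j => nth j w 0) (seq i a)).
Proof. revert i; induction a; intros i p w; simpl; constructor. constructor. apply IHa. Qed.
Lemma map_nth_seq (E : list nat) : map (fun j => nth j E 0) (seq 0 (length E)) = E.
Proof. induction E; simpl; auto. f_equal. rewrite <- seq_shift, map_map. simpl. exact IHE. Qed.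
Lemma map_nth_seq2 k r (E : list nat) : map (fun j => nth j (k::r::E) 0) (seq 2 (length E)) = E.
Proof. rewrite <- (map_nth_seq E) at 2. rewrite <- (seq_shift (length E) 1), <- seq_shift, !map_map. reflexivity. Qed.
Lemma map_nth_seq1 k (E : list nat) : map (fun j => nth j (k::E) 0) (seq 1 (length E)) = E.
Proof. rewrite <- (map_nth_seq E) at 2. rewrite <- seq_shift, !map_map. reflexivity. Qed.

Ltac cc0 := first [ apply c_proj | eapply c_orac | apply c_cst ].

Definition K_pred := cComp (cRec cZero P0) [P0].
Lemma k_pred : computes K_pred (fun p v => pred (nth 0 v 0)).
Proof. eapply computes_ext.
  eapply (c_rec _ _ (fun _ _ => 0) (fun p w => nth 0 w 0) _ (fun p v => nth 0 v 0) _ (fun p v => [])).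
  intros p v; constructor. apply c_proj. apply c_proj. apply cl_nil.
  intros p v; simpl. destruct (nth 0 v 0); auto. Qed.

Definition K_sub := cComp (cRec P0 (cComp K_pred [P1])) [P1;P0].
Lemma k_sub : computes K_sub (fun p v => nth 0 v 0 - nth 1 v 0).
Proof. eapply computes_ext.
  eapply (c_rec _ _ (fun p v => nth 0 v 0) (fun p w => pred (nth 1 w 0)) _ (fun p v => nth 1 v 0) _ (fun p v => [nth 0 v 0])).
  apply c_proj. apply (lift1 pred). apply k_pred. apply c_proj. apply c_proj.
  apply cl_cons. apply c_proj. apply cl_nil.
  intros p v; simpl. induction (nth 1 v 0); simpl. lia. rewrite IHn. lia. Qed.

Definition K_mul := cComp (cRec cZero (cComp K_add [P1;P2])) [P0;P1].
Lemma k_mul : computes K_mul (fun p v => nth 0 v 0 * nth 1 v 0).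
Proof. eapply computes_ext.
  eapply (c_rec _ _ (fun _ _ => 0) (fun p w => nth 1 w 0 + nth 2 w 0) _ (fun p v => nth 0 v 0) _ (fun p v => [nth 1 v 0])).
  intros p v; constructor. apply (lift2 Nat.add). apply k_add. apply c_proj. apply c_proj. apply c_proj.
  apply cl_cons. apply c_proj. apply cl_nil.
  intros p v; simpl. induction (nth 0 v 0); simpl. lia. rewrite IHn. lia. Qed.

Definition K_pow2 := cComp (cRec (ccst 1) (cComp K_add [P1;P1])) [P0].
Lemma k_pow2 : computes K_pow2 (fun p v => 2 ^ nth 0 v 0).
Proof. eapply computes_ext.
  eapply (c_rec _ _ (fun _ _ => 1) (fun p w => nth 1 w 0 + nth 1 w 0) _ (fun p v => nth 0 v 0) _ (fun p v => [])).
  apply c_cst. apply (lift2 Nat.add). apply k_add. apply c_proj. apply c_proj. apply c_proj. apply cl_nil.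
  intros p v; simpl. induction (nth 0 v 0); simpl. lia. rewrite IHn. lia. Qed.

Definition K_div2 := cComp (cRec cZero (cComp K_sub [P0;P1])) [P0].
Lemma k_div2 : computes K_div2 (fun p v => Nat.div2 (nth 0 v 0)).
Proof. eapply computes_ext.
  eapply (c_rec _ _ (fun _ _ => 0) (fun p w => nth 0 w 0 - nth 1 w 0) _ (fun p v => nth 0 v 0) _ (fun p v => [])).
  intros p v; constructor. apply (lift2 Nat.sub). apply k_sub. apply c_proj. apply c_proj. apply c_proj. apply cl_nil.
  intros p v; simpl. induction (nth 0 v 0); simpl. auto. rewrite IHn.
  pose proof (Nat.div2_odd n) as H1. pose proof (Nat.div2_odd (S n)) as H2.
  rewrite Nat.odd_succ in H2. rewrite <- Nat.negb_odd in H2. destruct (Nat.odd n); simpl in *; lia. Qed.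

Definition ifz (c a b : nat) := match c with 0 => a | S _ => b end.
Definition K_ifz := cComp (cRec P0 P3) [P0;P1;P2].
Lemma k_ifz : computes K_ifz (fun p v => ifz (nth 0 v 0) (nth 1 v 0) (nth 2 v 0)).
Proof. eapply computes_ext.
  eapply (c_rec _ _ (fun p v => nth 0 v 0) (fun p w => nth 3 w 0) _ (fun p v => nth 0 v 0) _ (fun p v => [nth 1 v 0; nth 2 v 0])).
  apply c_proj. apply c_proj. apply c_proj. apply cl_cons. apply c_proj. apply cl_cons. apply c_proj. apply cl_nil.
  intros p v; simpl. destruct (nth 0 v 0); simpl; auto. Qed.

Ltac cc1 := lazymatch goal with
  | |- computes _ (fun p v => nth _ v 0) => apply c_proj
  | |- computes _ (fun p v => p (@?a p v)) => eapply c_orac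
  | |- computes _ (fun p v => @?a p v + @?b p v) => eapply (lift2 Nat.add); [exact k_add| |]
  | |- computes _ (fun p v => @?a p v - @?b p v) => eapply (lift2 Nat.sub); [exact k_sub| |]
  | |- computes _ (fun p v => @?a p v * @?b p v) => eapply (lift2 Nat.mul); [exact k_mul| |]
  | |- computes _ (fun p v => pred (@?a p v)) => eapply (lift1 pred); [exact k_pred|]
  | |- computes _ (fun p v => 2 ^ (@?a p v)) => eapply (lift1 (Nat.pow 2)); [exact k_pow2|]
  | |- computes _ (fun p v => Nat.div2 (@?a p v)) => eapply (lift1 Nat.div2); [exact k_div2|]
  | |- computes _ (fun p v => ifz (@?a p v) (@?b p v) (@?c p v)) => eapply (lift3 ifz); [exact k_ifz| | |]
  | |- computes _ (fun p v => S (@?a p v)) => eapply (lift1 S); [intros ? ?; constructor|]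
  | |- computes _ (fun _ _ => _) => apply c_cst
  end.
Ltac cc := repeat cc1.

Definition ltbn (a b : nat) := if a <? b then 1 else 0.
Definition eqbn (a b : nat) := if a =? b then 1 else 0.
Lemma k_ltb : { c | computes c (fun p v => ltbn (nth 0 v 0) (nth 1 v 0)) }.
Proof. eexists. eapply computes_ext.
  instantiate (1 := fun p v => ifz (nth 1 v 0 - nth 0 v 0) 0 1). cc.
  intros p v; unfold ltbn. destruct (Nat.ltb_spec (nth 0 v 0) (nth 1 v 0));
   destruct (nth 1 v 0 - nth 0 v 0) eqn:E; simpl; auto; lia. Defined.
Lemma k_eqb : { c | computes c (fun p v => eqbn (nth 0 v 0) (nth 1 v 0)) }.
Proof. eexists. eapply computes_ext.
  instantiate (1 := fun p v => ifz ((nth 1 v 0 - nth 0 v 0) + (nth 0 v 0 - nth 1 v 0)) 1 0). cc.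
  intros p v; unfold eqbn. destruct (Nat.eqb_spec (nth 0 v 0) (nth 1 v 0));
   destruct ((nth 1 v 0 - nth 0 v 0) + (nth 0 v 0 - nth 1 v 0)) eqn:E; simpl; auto; lia. Defined.

Definition K_ltb := proj1_sig k_ltb.
Definition K_eqb := proj1_sig k_eqb.
Ltac cc2 := first [ lazymatch goal with
  | |- computes _ (fun p v => ltbn (@?a p v) (@?b p v)) => eapply (lift2 ltbn); [exact (proj2_sig k_ltb)| |]
  | |- computes _ (fun p v => eqbn (@?a p v) (@?b p v)) => eapply (lift2 eqbn); [exact (proj2_sig k_eqb)| |] end | cc1 ].

Definition sumf (g : nat -> nat) n := nat_rect (fun _ => nat) 0 (fun k r => r + g k) n.
Definition firstf (g : nat -> nat) n :=
  nat_rect (fun _ => nat) 0 (fun k r => ifz (ltbn r k) (ifz (g k) (S k) k) r) n.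

Lemma c_sum f F a cn N cs Cs : computes f F -> computes cn N -> computesl cs Cs ->
  (forall p v, length (Cs p v) = a) ->
  { c | computes c (fun p v => sumf (fun k => F p (k :: Cs p v)) (N p v)) }.
Proof. intros Hf Hn Hs Hl. eexists. eapply computes_ext.
  eapply (c_rec _ _ (fun _ _ => 0) (fun p w => nth 1 w 0 + F p (nth 0 w 0 :: map (fun j => nth j w 0) (seq 2 a))) cn N cs Cs).
  apply c_cst. eapply (lift2 Nat.add). apply k_add. apply c_proj.
  apply (c_comp f (P0 :: projs_from 2 a) F (fun p w => nth 0 w 0 :: map (fun j => nth j w 0) (seq 2 a))).
  auto. apply cl_cons. apply c_proj. apply c_projs. auto. auto.
  intros p v. unfold sumf. rewrite <- (Hl p v). induction (N p v). reflexivity.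
  cbn [nat_rect]. rewrite IHn. rewrite map_nth_seq2. auto. Defined.

Lemma c_first f F a cn N cs Cs : computes f F -> computes cn N -> computesl cs Cs ->
  (forall p v, length (Cs p v) = a) ->
  { c | computes c (fun p v => firstf (fun k => F p (k :: Cs p v)) (N p v)) }.
Proof. intros Hf Hn Hs Hl. eexists. eapply computes_ext.
  eapply (c_rec _ _ (fun _ _ => 0) (fun p w => ifz (ltbn (nth 1 w 0) (nth 0 w 0))
     (ifz (F p (nth 0 w 0 :: map (fun j => nth j w 0) (seq 2 a))) (S (nth 0 w 0)) (nth 0 w 0)) (nth 1 w 0)) cn N cs Cs).
  apply c_cst. repeat cc2. 
  apply (c_comp f (P0 :: projs_from 2 a) F (fun p w => nth 0 w 0 :: map (fun j => nth j w 0) (seq 2 a))).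
  auto. apply cl_cons. apply c_proj. apply c_projs.
  auto. auto.
  intros p v. unfold firstf. rewrite <- (Hl p v). induction (N p v). reflexivity.
  cbn [nat_rect]. rewrite IHn. rewrite map_nth_seq2. auto. Defined.

Definition iterf (h : nat -> nat) n x := nat_rect (fun _ => nat) x (fun _ r => h r) n.
Lemma c_iter h ch : computes ch (fun p v => h (nth 0 v 0)) ->
  { c | computes c (fun p v => iterf h (nth 0 v 0) (nth 1 v 0)) }.
Proof. intros H. eexists. eapply computes_ext.
  eapply (c_rec _ _ (fun p v => nth 0 v 0) (fun p w => h (nth 1 w 0)) _ (fun p v => nth 0 v 0) _ (fun p v => [nth 1 v 0])).
  apply c_proj. eapply (lift1 h). exact H. apply c_proj. apply c_proj. apply cl_cons. apply c_proj. apply cl_nil.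
  intros p v. reflexivity. Defined.

Definition shr i x := iterf Nat.div2 i x.
Definition wtl c := Nat.div2 (pred c).
Definition tlk l m := iterf wtl l m.
Definition k_shr := c_iter Nat.div2 K_div2 k_div2.
Lemma k_wtl : { c | computes c (fun p v => wtl (nth 0 v 0)) }.
Proof. eexists. unfold wtl. cc. Defined.
Definition k_tlk := c_iter wtl _ (proj2_sig k_wtl).

Ltac cc3 := first [ lazymatch goal with
  | |- computes _ (fun p v => shr (@?a p v) (@?b p v)) => eapply (lift2 shr); [exact (proj2_sig k_shr)| |]
  | |- computes _ (fun p v => tlk (@?a p v) (@?b p v)) => eapply (lift2 tlk); [exact (proj2_sig k_tlk)| |] end | cc2 ].

Lemma liftp1 (f : baire -> nat -> nat) c a A : computes c (fun p v => f p (nth 0 v 0)) -> computes a A ->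
  computes (cComp c [a]) (fun p v => f p (A p v)).
Proof. intros H Ha. apply (c_comp c [a] (fun p v => f p (nth 0 v 0)) (fun p v => [A p v])). apply H.
  apply cl_cons; [auto|apply cl_nil]. Qed.
Lemma liftp2 (f : baire -> nat -> nat -> nat) c a A b B :
  computes c (fun p v => f p (nth 0 v 0) (nth 1 v 0)) -> computes a A -> computes b B ->
  computes (cComp c [a;b]) (fun p v => f p (A p v) (B p v)).
Proof. intros H Ha Hb. apply (c_comp c [a;b] (fun p v => f p (nth 0 v 0) (nth 1 v 0)) (fun p v => [A p v; B p v])). apply H.
  repeat apply cl_cons; auto. apply cl_nil. Qed.

Definition mod2 x := x - 2 * Nat.div2 x.
Definition bitn b l := mod2 (shr l b).
Definition tzf k := sumf (fun i => eqbn (shr (S i) k * 2 ^ (S i)) k) k.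
Definition uf y := tzf (S y).
Definition us y := Nat.div2 (pred (shr (uf y) (S y))).
Definition pairf i n := 2 ^ i * (2 * n + 1) - 1.
Definition hdf c := ifz c 0 (1 - mod2 c).
Definition letter m l := hdf (tlk l m).
Definition lenf m := sumf (fun l => ifz (tlk l m) 0 1) m.
Definition jf m n := firstf (fun k => letter m (n + k)) n.

Lemma k_tz : { c | computes c (fun p v => tzf (nth 0 v 0)) }.
Proof. 
  assert (H0 : { c | computes c (fun p w => eqbn (shr (S (nth 0 w 0)) (nth 1 w 0) * 2 ^ (S (nth 0 w 0))) (nth 1 w 0))}).
  { eexists. repeat cc3. }
  destruct H0 as [c0 H].
  destruct (c_sum _ _ 1 _ _ [P0] (fun p v => [nth 0 v 0]) H (c_proj 0)) as [c Hc].
  apply cl_cons. apply c_proj. apply cl_nil. reflexivity.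
  exists c. exact Hc. Defined.

Ltac cc4 := first [ lazymatch goal with
  | |- computes _ (fun p v => tzf (@?a p v)) => eapply (lift1 tzf); [exact (proj2_sig k_tz)|] end | cc3 ].

Lemma k_uf : { c | computes c (fun p v => uf (nth 0 v 0)) }.
Proof. eexists. unfold uf. repeat cc4. Defined.
Lemma k_us : { c | computes c (fun p v => us (nth 0 v 0)) }.
Proof. eexists. unfold us. repeat cc4; exact (proj2_sig k_uf). Defined.
Lemma k_pairf : { c | computes c (fun p v => pairf (nth 0 v 0) (nth 1 v 0)) }.
Proof. eexists. unfold pairf. repeat cc4. Defined.
Lemma k_mod2 : { c | computes c (fun p v => mod2 (nth 0 v 0)) }.
Proof. eexists. unfold mod2. repeat cc4. Defined.
Ltac cc5 := first [ lazymatch goal with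
  | |- computes _ (fun p v => uf (@?a p v)) => eapply (lift1 uf); [exact (proj2_sig k_uf)|]
  | |- computes _ (fun p v => us (@?a p v)) => eapply (lift1 us); [exact (proj2_sig k_us)|]
  | |- computes _ (fun p v => mod2 (@?a p v)) => eapply (lift1 mod2); [exact (proj2_sig k_mod2)|]
  | |- computes _ (fun p v => pairf (@?a p v) (@?b p v)) => eapply (lift2 pairf); [exact (proj2_sig k_pairf)| |] end | cc4 ].
Lemma k_bitn : { c | computes c (fun p v => bitn (nth 0 v 0) (nth 1 v 0)) }.
Proof. eexists. unfold bitn. repeat cc5. Defined.
Lemma k_letter : { c | computes c (fun p v => letter (nth 0 v 0) (nth 1 v 0)) }.
Proof. eexists. unfold letter, hdf. repeat cc5. Defined.
Ltac cc6 := first [ lazymatch goal with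
  | |- computes _ (fun p v => bitn (@?a p v) (@?b p v)) => eapply (lift2 bitn); [exact (proj2_sig k_bitn)| |]
  | |- computes _ (fun p v => letter (@?a p v) (@?b p v)) => eapply (lift2 letter); [exact (proj2_sig k_letter)| |] end | cc5 ].
Lemma k_lenf : { c | computes c (fun p v => lenf (nth 0 v 0)) }.
Proof.
  assert (H0 : { c | computes c (fun p w => ifz (tlk (nth 0 w 0) (nth 1 w 0)) 0 1)}) by (eexists; repeat cc6).
  destruct H0 as [c0 H].
  destruct (c_sum _ _ 1 _ _ [P0] (fun p v => [nth 0 v 0]) H (c_proj 0)) as [c Hc].
  apply cl_cons. apply c_proj. apply cl_nil. reflexivity.
  exists c. exact Hc. Defined.
Lemma k_jf : { c | computes c (fun p v => jf (nth 0 v 0) (nth 1 v 0)) }.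
Proof.
  assert (H0 : { c | computes c (fun p w => letter (nth 1 w 0) (nth 2 w 0 + nth 0 w 0))}) by (eexists; repeat cc6).
  destruct H0 as [c0 H].
  destruct (c_first _ _ 2 _ _ [P0;P1] (fun p v => [nth 0 v 0; nth 1 v 0]) H (c_proj 1)) as [c Hc].
  apply cl_cons. apply c_proj. apply cl_cons. apply c_proj. apply cl_nil. reflexivity.
  exists c. exact Hc. Defined.
Ltac cc7 := first [ lazymatch goal with
  | |- computes _ (fun p v => lenf (@?a p v)) => eapply (lift1 lenf); [exact (proj2_sig k_lenf)|]
  | |- computes _ (fun p v => jf (@?a p v) (@?b p v)) => eapply (lift2 jf); [exact (proj2_sig k_jf)| |] end | cc6 ].

(** the game name computed from the input p *)
Definition Ngf (p : baire) := p 0 + p 1.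
Definition gname (p : baire) j x := p (ifz (ltbn j (p 0)) (2 * (pairf (j - p 0) x + 1) + 1) (2 * (pairf j x + 1))).
Definition goutf (p : baire) := 2 ^ Ngf p + 2.
Definition turnf (p : baire) m :=
  ifz (ltbn (jf m (Ngf p)) (Ngf p))
   (ltbn (lenf m) (2 * Ngf p) - ltbn (lenf m) (Ngf p))
   (ifz (letter m (jf m (Ngf p))) 0 (gname p (jf m (Ngf p)) (pairf 0 (tlk (Ngf p + jf m (Ngf p) + 1) m)))).
Definition preff m := ifz (uf m) (ltbn (uf (us m)) (us (us m))) (ltbn (us (us m)) (uf (us m))).
Definition ttf (p : baire) a s := firstf (fun o => ifz a (bitn s o) (1 - bitn s o)) (goutf p).
Definition ccount (p : baire) t := ifz t 1 (ltbn t (goutf p) * (Ngf p * 2 ^ Ngf p + (2 ^ Ngf p + 1 - t))).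
Definition cword (p : baire) t i := ifz t 0 (ifz (ltbn (shr (Ngf p) i) (Ngf p))
      (2 ^ Ngf p - 1 + (t - 1 + (i - Ngf p * 2 ^ Ngf p)) + 2 ^ Ngf p * (2 ^ Ngf p - 1))
      ((1 - bitn i (shr (Ngf p) i)) * (i - 2 ^ Ngf p * shr (Ngf p) i) + 3 * 2 ^ (Ngf p + shr (Ngf p) i) - 1)).
Definition lcount (p : baire) t := ifz t 0 (ltbn t (goutf p) * (Ngf p * 2 ^ Ngf p)).
Definition lword (p : baire) i :=
  bitn i (shr (Ngf p) i) * (i - 2 ^ Ngf p * shr (Ngf p) i) + 3 * 2 ^ (Ngf p + shr (Ngf p) i) - 1.
Definition G2f (p : baire) t y := ifz (uf y) (ifz (us y) (ccount p t) (cword p t (pred (us y))))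
             (ifz (pred (uf y)) (ifz (us y) (lcount p t) (lword p (pred (us y))))
                  (gname p (shr (Ngf p) (uf y - 2)) (pairf 1 (us y)))).
Definition Unamef (p : baire) a s y := ifz y a (G2f p (ttf p a s) (pred y)).
Definition Hf (p : baire) y := ifz (uf y) 2 (ifz (pred (uf y)) (goutf p) (ifz (pred (pred (uf y))) (turnf p (us y))
   (ifz (pred (pred (pred (uf y)))) (preff (us y)) (Unamef p (uf (uf y - 4)) (us (uf y - 4)) (us y))))).

(** the output computed from <p, q> *)
Definition betaf (o : baire) n := nat_rect (fun _ => nat) 0
  (fun k r => r + 2 ^ k * o (2 * (2 ^ k - 1 + r) + 1)) n.
Definition NK (o : baire) := o 0 + o 2.
Definition Kf (o : baire) n := ifz (mod2 n)
  (o (2 * (betaf o (NK o) + 3 * 2 ^ (NK o + uf (Nat.div2 n)) - 1 + 2 ^ (NK o + uf (Nat.div2 n) + 1) * us (Nat.div2 n)) + 1))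
  (1 - bitn (betaf o (NK o)) (o 0 + uf (Nat.div2 n))).

Lemma k_turnf : { c | computes c (fun p v => turnf p (nth 0 v 0)) }.
Proof. eexists. unfold turnf, gname, Ngf. repeat cc7. Defined.
Lemma k_preff : { c | computes c (fun p v => preff (nth 0 v 0)) }.
Proof. eexists. unfold preff. repeat cc7. Defined.
Lemma k_ttf : { c | computes c (fun p v => ttf p (nth 0 v 0) (nth 1 v 0)) }.
Proof.
  assert (H0 : { c | computes c (fun p w => ifz (nth 1 w 0) (bitn (nth 2 w 0) (nth 0 w 0)) (1 - bitn (nth 2 w 0) (nth 0 w 0)))}) by (eexists; repeat cc7).
  destruct H0 as [c0 H].
  assert (H1 : { c | computes c (fun p v => goutf p)}) by (eexists; unfold goutf, Ngf; repeat cc7).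
  destruct H1 as [c1 H1].
  destruct (c_first _ _ 2 _ _ [P0;P1] (fun p v => [nth 0 v 0; nth 1 v 0]) H H1) as [c Hc].
  apply cl_cons. apply c_proj. apply cl_cons. apply c_proj. apply cl_nil. reflexivity.
  exists c. exact Hc. Defined.
Lemma k_Hf : { c | computes c (fun p v => Hf p (nth 0 v 0)) }.
Proof. eexists. unfold Hf, Unamef, G2f, lword, lcount, cword, ccount, goutf, gname, Ngf.
  repeat first [ lazymatch goal with
  | |- computes _ (fun p v => turnf p (@?a p v)) => eapply (liftp1 turnf); [exact (proj2_sig k_turnf)|]
  | |- computes _ (fun p v => preff (@?a p v)) => eapply (lift1 preff); [exact (proj2_sig k_preff)|]
  | |- computes _ (fun p v => ttf p (@?a p v) (@?b p v)) => eapply (liftp2 ttf); [exact (proj2_sig k_ttf)| |] end | cc7 ].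
Defined.
Lemma k_betaf : { c | computes c (fun p v => betaf p (nth 0 v 0)) }.
Proof.
  assert (H0 : { c | computes c (fun p w => nth 1 w 0 + 2 ^ (nth 0 w 0) * p (2 * (2 ^ (nth 0 w 0) - 1 + nth 1 w 0) + 1))}) by (eexists; repeat cc7).
  destruct H0 as [c0 H].
  eexists. eapply computes_ext.
  apply (c_rec _ _ (fun _ _ => 0) _ P0 (fun p v => nth 0 v 0) [] (fun _ _ => []) (c_cst 0) H (c_proj 0) cl_nil).
  reflexivity. Defined.
Lemma k_Kf : { c | computes c (fun p v => Kf p (nth 0 v 0)) }.
Proof. eexists. unfold Kf, NK.
  repeat first [ lazymatch goal with
  | |- computes _ (fun p v => betaf p (@?a p v)) => eapply (liftp1 betaf); [exact (proj2_sig k_betaf)|] end | cc7 ].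
Defined.

Lemma shr_spec i x : shr i x = x / 2 ^ i.
Proof. unfold shr, iterf. induction i; cbn [nat_rect]. rewrite Nat.pow_0_r, Nat.div_1_r; auto.
  rewrite IHi, Nat.div2_div, Nat.div_div; try (apply Nat.pow_nonzero; lia); try lia. rewrite Nat.pow_succ_r by lia.
  f_equal. lia. Qed.

Lemma mod2_spec x : mod2 x = x mod 2.
Proof. unfold mod2. rewrite Nat.div2_div. pose proof (Nat.div_mod x 2). lia. Qed.

Lemma bitn_spec b l : bitn b l = if Nat.testbit b l then 1 else 0.
Proof. unfold bitn. rewrite mod2_spec, shr_spec. pose proof (Nat.testbit_spec' b l).
  destruct (Nat.testbit b l); simpl in *; lia. Qed.

Lemma ifz_0 a b : ifz 0 a b = a. Proof. reflexivity. Qed.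
Lemma ifz_S n a b : ifz (S n) a b = b. Proof. reflexivity. Qed.
Lemma ltbn_spec a b : ltbn a b = if a <? b then 1 else 0. Proof. reflexivity. Qed.

Lemma sumf_ext g1 g2 n : (forall k, k < n -> g1 k = g2 k) -> sumf g1 n = sumf g2 n.
Proof. induction n; simpl; intros; auto. unfold sumf in *; simpl. rewrite IHn, H; auto. Qed.

Lemma sumf_lt i n : sumf (fun k => if k <? i then 1 else 0) n = Nat.min i n.
Proof. induction n. simpl. lia. unfold sumf in *; simpl. rewrite IHn.
  destruct (Nat.ltb_spec n i); lia. Qed.

Lemma firstf_spec g n : let r := firstf g n in
  r <= n /\ (forall k, k < r -> g k = 0) /\ (r < n -> g r <> 0).
Proof. induction n; simpl.
  - split; [lia|split]; intros; lia.
  - destruct IHn as (H1 & H2 & H3). unfold firstf in *. simpl.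
    set (r := nat_rect _ _ _ n) in *.
    rewrite ltbn_spec. destruct (Nat.ltb_spec r n).
    + simpl. split; [lia|split]; auto.
    + assert (r = n) by lia. subst r. rewrite H0 in *. destruct (g n) eqn:E; simpl.
      * split; [lia|split]. intros. destruct (Nat.eq_dec k n). subst; auto. apply H2; lia. intros; lia.
      * split; [lia|split]. auto. intros _; lia. Qed.

Lemma firstf_unique g n r : r <= n -> (forall k, k < r -> g k = 0) -> (r < n -> g r <> 0) -> firstf g n = r.
Proof. intros A B C. destruct (firstf_spec g n) as (H1 & H2 & H3).
  set (r' := firstf g n) in *.
  destruct (Nat.lt_trichotomy r r') as [L|[E|L]]; auto.
  - exfalso. apply C. lia. apply H2; auto.
  - exfalso. apply H3. lia. apply B; auto. Qed.

Lemma pow2_pos i : 0 < 2 ^ i. Proof. apply Nat.neq_0_lt_0, Nat.pow_nonzero; lia. Qed.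
Lemma pow2_gt i : i < 2 ^ i. Proof. induction i; simpl; lia. Qed.

Lemma divides_pow2 i n m : (2 ^ i * (2 * n + 1)) mod 2 ^ m = 0 <-> m <= i.
Proof. split.
  - intros H. destruct (Nat.le_gt_cases m i); auto. exfalso.
    apply Nat.mod_divide in H; [|apply Nat.pow_nonzero; lia].
    destruct H as [c Hc]. replace m with (i + S (m - S i)) in Hc by lia.
    rewrite Nat.pow_add_r in Hc.
    assert (2 * n + 1 = c * 2 ^ S (m - S i)).
    { apply (Nat.mul_cancel_l _ _ (2 ^ i)). apply Nat.pow_nonzero; lia. rewrite Hc. ring. }
    rewrite Nat.pow_succ_r in H by lia. replace (c * (2 * 2 ^ (m - S i))) with (2 * (c * 2 ^ (m - S i))) in H by ring. lia.
  - intros H. apply Nat.mod_divide. apply Nat.pow_nonzero; lia.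
    exists (2 ^ (i - m) * (2 * n + 1)). replace i with (i - m + m) at 1 by lia.
    rewrite Nat.pow_add_r. ring. Qed.

Lemma tzf_spec i n : tzf (2 ^ i * (2 * n + 1)) = i.
Proof. unfold tzf. set (k := 2 ^ i * (2 * n + 1)).
  assert (Hk : i < k). { pose proof (pow2_gt i). unfold k. nia. }
  rewrite (sumf_ext _ (fun j => if j <? i then 1 else 0)). rewrite sumf_lt. lia.
  intros j _. unfold eqbn. rewrite shr_spec.
  pose proof (divides_pow2 i n (S j)). fold k in H.
  pose proof (Nat.div_mod k (2 ^ S j) (Nat.pow_nonzero 2 (S j) ltac:(lia))).
  destruct (Nat.eqb_spec (k / 2 ^ S j * 2 ^ S j) k); destruct (Nat.ltb_spec j i); auto.
  - exfalso. assert (Hm : k mod 2 ^ S j = 0) by lia. apply H in Hm. lia.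
  - exfalso. assert (Hm : k mod 2 ^ S j = 0) by (apply H; lia). lia. Qed.

Lemma pair_S i n : S (pair_nat i n) = 2 ^ i * (2 * n + 1).
Proof. unfold pair_nat. pose proof (pow2_pos i). nia. Qed.

Lemma uf_pair i n : uf (pair_nat i n) = i.
Proof. unfold uf. rewrite pair_S. apply tzf_spec. Qed.
Lemma us_pair i n : us (pair_nat i n) = n.
Proof. unfold us. rewrite uf_pair, pair_S, shr_spec.
  rewrite Nat.mul_comm, Nat.div_mul by (apply Nat.pow_nonzero; lia).
  rewrite Nat.div2_div. replace (pred (2 * n + 1)) with (n * 2) by lia. apply Nat.div_mul; lia. Qed.
Lemma pairf_eq i n : pairf i n = pair_nat i n. Proof. reflexivity. Qed.
Lemma pair_inj i n i' n' : pair_nat i n = pair_nat i' n' -> i = i' /\ n = n'.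
Proof. intros H. split. rewrite <- (uf_pair i n), <- (uf_pair i' n'), H; auto.
  rewrite <- (us_pair i n), <- (us_pair i' n'), H; auto. Qed.

Lemma wcode_app w u : wcode (w ++ u) = wcode w + 2 ^ length w * wcode u.
Proof. induction w; simpl. lia. rewrite IHw. destruct a; lia. Qed.

Lemma wcode_inj w u : wcode w = wcode u -> w = u.
Proof. revert u; induction w as [|a w IH]; intros [|b u]; simpl; intros H; auto.
  - destruct b; lia. - destruct a; lia.
  - destruct a, b; try lia; f_equal; apply IH; lia. Qed.

Lemma wcode_surj y : exists w, wcode w = y.
Proof. induction y as [y IH] using lt_wf_ind. destruct y. exists []; auto.
  destruct (IH (Nat.div2 y)) as [w Hw]. pose proof (Nat.div2_odd y). destruct (Nat.odd y); simpl in *; lia.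
  pose proof (Nat.div2_odd y). exists ((Nat.odd y) :: w). simpl. rewrite Hw.
  destruct (Nat.odd y); simpl in *; lia. Qed.

Lemma len_le_wcode w : length w <= wcode w.
Proof. induction w; simpl; auto. destruct a; lia. Qed.

Lemma wtl_wcode w : wtl (wcode w) = wcode (tl w).
Proof. unfold wtl. destruct w as [|b w]; simpl. auto. destruct b.
  replace (pred (wcode w + (wcode w + 0) + 2)) with (S (2 * wcode w)) by lia. apply Nat.div2_succ_double.
  replace (pred (wcode w + (wcode w + 0) + 1)) with (2 * wcode w) by lia. apply Nat.div2_double. Qed.

Lemma skipn_S_tl {A} l (w : list A) : skipn (S l) w = tl (skipn l w).
Proof. revert w; induction l; intros [|a w]; simpl; auto. rewrite <- IHl. destruct w; reflexivity. Qed.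

Lemma tlk_wcode l w : tlk l (wcode w) = wcode (skipn l w).
Proof. induction l. reflexivity. unfold tlk, iterf in *. cbn [nat_rect]. rewrite IHl, wtl_wcode, skipn_S_tl. auto. Qed.

Definition hdb (w : word) := match w with b :: _ => if b then 1 else 0 | [] => 0 end.
Lemma hdf_wcode w : hdf (wcode w) = hdb w.
Proof. unfold hdf. destruct w as [|b w]; simpl. auto. unfold mod2. destruct b.
  replace (wcode w + (wcode w + 0) + 2) with (2 * S (wcode w)) by lia. rewrite Nat.div2_double.
  rewrite Nat.sub_diag. reflexivity.
  replace (wcode w + (wcode w + 0) + 1) with (S (2 * wcode w)) by lia. rewrite Nat.div2_succ_double.
  replace (S (2 * wcode w) - 2 * wcode w) with 1 by lia. reflexivity. Qed.

Lemma letter_wcode w l : letter (wcode w) l = hdb (skipn l w).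
Proof. unfold letter. rewrite tlk_wcode, hdf_wcode. auto. Qed.

Lemma hdb_skipn w l : hdb (skipn l w) = if nth l w false then (if l <? length w then 1 else 0) else 0.
Proof. revert l; induction w; intros [|l]; simpl; auto. Qed.

Lemma letter_spec w l : letter (wcode w) l = if (l <? length w) && nth l w false then 1 else 0.
Proof. rewrite letter_wcode, hdb_skipn. destruct (l <? length w), (nth l w false); auto. Qed.

Lemma lenf_wcode w : lenf (wcode w) = length w.
Proof. unfold lenf. rewrite (sumf_ext _ (fun k => if k <? length w then 1 else 0)).
  rewrite sumf_lt. pose proof (len_le_wcode w). lia.
  intros k _. rewrite tlk_wcode. destruct (Nat.ltb_spec k (length w)).
  - destruct (skipn k w) eqn:E. apply (f_equal (@length _)) in E. rewrite length_skipn in E. simpl in E. lia.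
    replace (wcode (b :: l)) with (S (wcode (b::l) - 1)) by (simpl; destruct b; lia). reflexivity.
  - rewrite skipn_all2 by lia. auto. Qed.

Definition bw (b N : nat) : word := map (fun l => Nat.testbit b l) (seq 0 N).
Lemma length_bw b N : length (bw b N) = N. Proof. unfold bw. rewrite length_map, length_seq. auto. Qed.
Lemma wcode_bw b N : b < 2 ^ N -> wcode (bw b N) = 2 ^ N - 1 + b.
Proof. revert b; induction N; intros b H; simpl. simpl in H. lia.
  unfold bw in *. simpl. rewrite <- seq_shift, map_map.
  rewrite (map_ext _ (fun l => Nat.testbit (b / 2) l)) by (intros; rewrite Nat.div2_bits; auto).
  rewrite IHN. pose proof (Nat.div2_odd b) as H0. rewrite Nat.div2_div in H0.
  pose proof (pow2_pos N). destruct (Nat.odd b); simpl in *; lia.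
  apply Nat.div_lt_upper_bound; simpl in *; lia. Qed.
Lemma nth_bw b N l : l < N -> nth l (bw b N) false = Nat.testbit b l.
Proof. intros H. unfold bw. rewrite nth_indep with (d' := Nat.testbit b 0) by (rewrite length_map, length_seq; auto).
  rewrite map_nth, seq_nth; auto. Qed.

Lemma wcode_rf K : wcode (repeat false K) = 2 ^ K - 1.
Proof. induction K; simpl; auto. rewrite IHK. pose proof (pow2_pos K). lia. Qed.
Lemma wcode_chal K : wcode (repeat false K ++ [true]) = 3 * 2 ^ K - 1.
Proof. rewrite wcode_app, wcode_rf, repeat_length. simpl. pose proof (pow2_pos K). lia. Qed.

Lemma nth_app_r' {A} (l1 l2 : list A) n d : length l1 <= n -> nth n (l1 ++ l2) d = nth (n - length l1) l2 d.
Proof. apply app_nth2. Qed.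
Lemma nth_app_l' {A} (l1 l2 : list A) n d : n < length l1 -> nth n (l1 ++ l2) d = nth n l1 d.
Proof. apply app_nth1. Qed.

Lemma jf_none w N : (forall k, k < N -> N + k < length w -> nth (N + k) w false = false) ->
  jf (wcode w) N = N.
Proof. intros H. unfold jf. apply firstf_unique; auto; try lia.
  intros k Hk. rewrite letter_spec. destruct (Nat.ltb_spec (N + k) (length w)); simpl; auto.
  rewrite H; auto. Qed.

Lemma turn_T1 p w : length w < Ngf p -> turnf p (wcode w) = 0.
Proof. intros H. unfold turnf. rewrite jf_none by (intros; lia).
  rewrite ltbn_spec, Nat.ltb_irrefl. cbn [ifz]. rewrite lenf_wcode, !ltbn_spec.
  destruct (Nat.ltb_spec (length w) (2 * Ngf p)); destruct (Nat.ltb_spec (length w) (Ngf p)); simpl; lia. Qed.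

Lemma turn_T2 p d k : length d = Ngf p -> k < Ngf p -> turnf p (wcode (d ++ repeat false k)) = 1.
Proof. intros H1 H2. unfold turnf. rewrite jf_none.
  rewrite ltbn_spec, Nat.ltb_irrefl. cbn [ifz]. rewrite lenf_wcode, !ltbn_spec, length_app, repeat_length.
  destruct (Nat.ltb_spec (length d + k) (2 * Ngf p)); destruct (Nat.ltb_spec (length d + k) (Ngf p)); simpl; lia.
  intros k' Hk Hl. rewrite nth_app_r' by lia. rewrite length_app, repeat_length in Hl.
  apply nth_repeat. Qed.

Lemma turn_T3 p d K u : length d = Ngf p -> K < Ngf p ->
  turnf p (wcode (d ++ repeat false K ++ true :: u)) =
  if nth K d false then gname p K (pair_nat 0 (wcode u)) else 0.
Proof. intros H1 H2. set (w := d ++ repeat false K ++ true :: u).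
  assert (Hl : length w = Ngf p + K + S (length u)).
  { unfold w. rewrite !length_app, repeat_length. simpl. lia. }
  assert (HJ : jf (wcode w) (Ngf p) = K).
  { unfold jf. apply firstf_unique; try lia.
    - intros k Hk. rewrite letter_spec. unfold w.
      rewrite nth_app_r' by lia. rewrite nth_app_l' by (rewrite repeat_length; lia).
      rewrite nth_repeat. rewrite andb_false_r. auto.
    - intros _. rewrite letter_spec. unfold w.
      rewrite nth_app_r' by lia. rewrite nth_app_r' by (rewrite repeat_length; lia).
      rewrite repeat_length. replace (Ngf p + K - length d - K) with 0 by lia. simpl.
      replace (Ngf p + K <? length (d ++ repeat false K ++ true :: u)) with true by (symmetry; apply Nat.ltb_lt; fold w; lia). simpl; lia. }
  unfold turnf. rewrite HJ. rewrite ltbn_spec. replace (K <? Ngf p) with true by (symmetry; apply Nat.ltb_lt; auto).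
  simpl. rewrite letter_spec. replace (K <? length w) with true by (symmetry; apply Nat.ltb_lt; lia).
  simpl. unfold w at 1. rewrite nth_app_l' by lia.
  destruct (nth K d false); simpl; auto. rewrite tlk_wcode.
  unfold w. rewrite app_assoc. rewrite skipn_app. rewrite skipn_all2. rewrite length_app, repeat_length.
  replace (Ngf p + K + 1 - (length d + K)) with 1 by lia. simpl. auto.
  rewrite length_app, repeat_length. lia. Qed.

Lemma tb_low a c N l : a < 2 ^ N -> l < N -> Nat.testbit (2 ^ N * c + a) l = Nat.testbit a l.
Proof. intros H1 H2. rewrite <- (Nat.mod_pow2_bits_low _ N) by auto.
  rewrite Nat.mul_comm, Nat.add_comm, Nat.Div0.mod_add, Nat.mod_small by auto. auto. Qed.
Lemma tb_high a c N l : a < 2 ^ N -> Nat.testbit (2 ^ N * c + a) (l + N) = Nat.testbit c l.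
Proof. intros H1. rewrite <- Nat.div_pow2_bits. f_equal.
  rewrite Nat.mul_comm, Nat.add_comm, Nat.div_add by (apply Nat.pow_nonzero; lia).
  rewrite Nat.div_small by auto. auto. Qed.
Lemma tb_small a N l : a < 2 ^ N -> N <= l -> Nat.testbit a l = false.
Proof. intros H1 H2. replace a with (2 ^ N * 0 + a) by lia. replace l with ((l - N) + N) by lia.
  rewrite tb_high by auto. apply Nat.bits_0. Qed.

Definition rsem N (x : cantor) := sumf (fun l => if x l then 2 ^ l else 0) N.
Lemma rsem_lt N x : rsem N x < 2 ^ N.
Proof. induction N; unfold rsem in *; simpl. lia. destruct (x N); lia. Qed.
Lemma rsem_bits N x l : l < N -> Nat.testbit (rsem N x) l = x l.
Proof. induction N; intros H. lia.
  assert (R : rsem (S N) x = 2 ^ N * (if x N then 1 else 0) + rsem N x).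
  { unfold rsem, sumf. cbn [nat_rect]. destruct (x N); lia. }
  pose proof (rsem_lt N x). rewrite R.
  destruct (Nat.eq_dec l N).
  - subst. pose proof (tb_high (rsem N x) (if x N then 1 else 0) N 0 (rsem_lt N x)) as T.
    simpl in T. rewrite T. destruct (x N); auto.
  - rewrite tb_low by (auto; lia). apply IHN. lia. Qed.

Lemma bits_eq_num a b N : a < 2 ^ N -> b < 2 ^ N -> (forall l, l < N -> Nat.testbit a l = Nat.testbit b l) -> a = b.
Proof. intros Ha Hb H. apply Nat.bits_inj. intros l. destruct (Nat.lt_ge_cases l N).
  apply H; auto. rewrite !tb_small with (N := N); auto. Qed.

Definition shiftc (x : cantor) n : cantor := fun k => x (n + k).
Lemma prefix_app w1 w2 x : prefix_of (w1 ++ w2) x <-> prefix_of w1 x /\ prefix_of w2 (shiftc x (length w1)).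
Proof. unfold prefix_of, shiftc. split.
  - intros H. split; intros i Hi.
    + rewrite <- (H i) by (rewrite length_app; lia). rewrite nth_app_l'; auto.
    + rewrite <- (H (length w1 + i)) by (rewrite length_app; lia). rewrite nth_app_r' by lia. f_equal. lia.
  - intros [H1 H2] i Hi. rewrite length_app in Hi. destruct (Nat.lt_ge_cases i (length w1)).
    rewrite nth_app_l'; auto. rewrite nth_app_r' by lia. rewrite H2 by lia. f_equal. lia. Qed.
Lemma prefix_bw b N x : prefix_of (bw b N) x <-> forall l, l < N -> Nat.testbit b l = x l.
Proof. unfold prefix_of. rewrite length_bw. split; intros H l Hl; rewrite <- (H l) by auto; rewrite ?nth_bw; auto. Qed.
Lemma prefix_rf K x : prefix_of (repeat false K) x <-> forall k, k < K -> x k = false.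
Proof. unfold prefix_of. rewrite repeat_length. split; intros H l Hl; rewrite <- (H l) by auto; rewrite ?nth_repeat; auto. Qed.
Lemma prefix_t x : prefix_of [true] x <-> x 0 = true.
Proof. unfold prefix_of. simpl. split. intros H; symmetry; apply (H 0); lia. intros H [|i] Hi; simpl. auto. lia. Qed.

Lemma app_word_spec w y x : (forall n, x n = app_word w y n) <-> prefix_of w x /\ forall n, y n = x (length w + n).
Proof. unfold app_word, prefix_of. split.
  - intros H. split.
    + intros i Hi. rewrite H. rewrite (proj2 (Nat.ltb_lt _ _) Hi). auto.
    + intros n. rewrite H. replace (length w + n <? length w) with false by (symmetry; apply Nat.ltb_ge; lia).
      f_equal. lia.
  - intros [H1 H2] n. destruct (Nat.ltb_spec n (length w)). rewrite H1; auto.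
    rewrite H2. f_equal. lia. Qed.

Definition gamen (p : baire) j : baire := fun x => gname p j x.
Definition Wset (G1 : rpc) p j : cantor -> Prop := rdenot G1 (comp 1 (gamen p j)).
Definition jsem N (x : cantor) := firstf (fun k => if x (N + k) then 1 else 0) N.
Definition topo N := 2 ^ N + 1.
Definition vsem (G1 : rpc) p (x : cantor) : nat :=
  if jsem (Ngf p) x <? Ngf p then
    (if x (jsem (Ngf p) x) then
      (if excluded_middle_informative (Wset G1 p (jsem (Ngf p) x) (shiftc x (Ngf p + jsem (Ngf p) x + 1)))
       then topo (Ngf p) else 0)
     else topo (Ngf p))
  else 1 + rsem (Ngf p) x.

Lemma jsem_spec N x J : J < N -> (jsem N x = J <-> (forall k, k < J -> x (N + k) = false) /\ x (N + J) = true).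
Proof. intros HJ. unfold jsem. split.
  - intros E. destruct (firstf_spec (fun k => if x (N + k) then 1 else 0) N) as (H1 & H2 & H3).
    rewrite E in *. split.
    + intros k Hk. specialize (H2 k Hk). destruct (x (N + k)); auto. discriminate.
    + specialize (H3 HJ). destruct (x (N + J)); auto.
  - intros [H1 H2]. apply firstf_unique; try lia.
    intros k Hk. rewrite H1; auto. intros _. rewrite H2. auto. Qed.
Lemma jsem_none N x : jsem N x = N <-> forall k, k < N -> x (N + k) = false.
Proof. unfold jsem. split.
  - intros E. destruct (firstf_spec (fun k => if x (N + k) then 1 else 0) N) as (H1 & H2 & H3).
    rewrite E in *. intros k Hk. specialize (H2 k Hk). destruct (x (N + k)); auto. discriminate.
  - intros H. apply firstf_unique; try lia. intros k Hk. rewrite H; auto. Qed.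
Lemma jsem_le N x : jsem N x <= N.
Proof. apply firstf_spec. Qed.

Lemma vsem_lt G1 p x : vsem G1 p x < 2 ^ Ngf p + 2.
Proof. unfold vsem, topo. pose proof (rsem_lt (Ngf p) x).
  destruct (_ <? _); [destruct (x _); [destruct (excluded_middle_informative _)|]|]; lia. Qed.

Lemma G2_c0 p t z : comp 0 (G2f p t) z = ifz z (ccount p t) (cword p t (pred z)).
Proof. unfold comp, G2f. rewrite uf_pair, us_pair. reflexivity. Qed.
Lemma G2_c1 p t z : comp 1 (G2f p t) z = ifz z (lcount p t) (lword p (pred z)).
Proof. unfold comp, G2f. rewrite uf_pair, us_pair. reflexivity. Qed.
Lemma G2_c2 p t i z : comp (2 + i) (G2f p t) z = gname p (shr (Ngf p) i) (pair_nat 1 z).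
Proof. unfold comp, G2f. rewrite uf_pair, us_pair. simpl. rewrite Nat.sub_0_r. reflexivity. Qed.
Lemma G2_c2f p t i : comp (2 + i) (G2f p t) = comp 1 (gamen p (shr (Ngf p) i)).
Proof. apply functional_extensionality. intros z. rewrite G2_c2. reflexivity. Qed.

Lemma dec_i N i : i = 2 ^ N * shr N i + (i - 2 ^ N * shr N i) /\ i - 2 ^ N * shr N i < 2 ^ N.
Proof. rewrite shr_spec. pose proof (Nat.div_mod i (2 ^ N) (Nat.pow_nonzero 2 N ltac:(lia))).
  pose proof (Nat.mod_upper_bound i (2 ^ N) (Nat.pow_nonzero 2 N ltac:(lia))). lia. Qed.
Lemma shr_comp N K b : b < 2 ^ N -> shr N (2 ^ N * K + b) = K.
Proof. intros H. rewrite shr_spec. rewrite Nat.mul_comm, Nat.add_comm, Nat.div_add by (apply Nat.pow_nonzero; lia).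
  rewrite Nat.div_small; auto. Qed.
Lemma bitn_comp N K b l : b < 2 ^ N -> l < N -> bitn (2 ^ N * K + b) l = bitn b l.
Proof. intros. rewrite !bitn_spec, tb_low; auto. Qed.
Lemma code_cw N K b : b < 2 ^ N -> wcode (bw b N ++ repeat false K ++ [true]) = b + 3 * 2 ^ (N + K) - 1.
Proof. intros H. rewrite wcode_app, wcode_bw, wcode_chal, length_bw, Nat.pow_add_r by auto.
  pose proof (pow2_pos N). pose proof (pow2_pos K). nia. Qed.
Lemma code_fw N b : b < 2 ^ N -> wcode (bw b N ++ repeat false N) = 2 ^ N - 1 + b + 2 ^ N * (2 ^ N - 1).
Proof. intros H. rewrite wcode_app, wcode_bw, wcode_rf, length_bw by auto. lia. Qed.

Lemma prefix_cw b N K x : prefix_of (bw b N ++ repeat false K ++ [true]) x <->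
  (forall l, l < N -> Nat.testbit b l = x l) /\ (forall k, k < K -> x (N + k) = false) /\ x (N + K) = true.
Proof. rewrite !prefix_app, prefix_bw, prefix_rf, prefix_t, length_bw, repeat_length. unfold shiftc.
  rewrite Nat.add_0_r. tauto. Qed.
Lemma prefix_fw b N x : prefix_of (bw b N ++ repeat false N) x <->
  (forall l, l < N -> Nat.testbit b l = x l) /\ (forall k, k < N -> x (N + k) = false).
Proof. rewrite !prefix_app, prefix_bw, prefix_rf, length_bw. unfold shiftc. tauto. Qed.

Lemma rsem_eq N x b : b < 2 ^ N -> (forall l, l < N -> Nat.testbit b l = x l) -> rsem N x = b.
Proof. intros H1 H2. apply (bits_eq_num _ _ N); auto. apply rsem_lt. intros l Hl. rewrite rsem_bits, H2; auto. Qed.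

Definition cwd b N K := bw b N ++ repeat false K ++ [true].

Lemma t_ifz t a b : 1 <= t -> ifz t a b = b.
Proof. destruct t; simpl; auto; lia. Qed.

Lemma cc_eval p t : 1 <= t <= 2 ^ Ngf p + 1 -> comp 0 (G2f p t) 0 = Ngf p * 2 ^ Ngf p + (2 ^ Ngf p + 1 - t).
Proof. intros H. rewrite G2_c0. simpl. unfold ccount. rewrite t_ifz by lia. unfold goutf.
  rewrite ltbn_spec. replace (t <? 2 ^ Ngf p + 2) with true by (symmetry; apply Nat.ltb_lt; lia). lia. Qed.
Lemma lc_eval p t : 1 <= t <= 2 ^ Ngf p + 1 -> comp 1 (G2f p t) 0 = Ngf p * 2 ^ Ngf p.
Proof. intros H. rewrite G2_c1. simpl. unfold lcount. rewrite t_ifz by lia. unfold goutf.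
  rewrite ltbn_spec. replace (t <? 2 ^ Ngf p + 2) with true by (symmetry; apply Nat.ltb_lt; lia). lia. Qed.

Lemma cw_eval1 p t i : 1 <= t -> shr (Ngf p) i < Ngf p ->
  exists b, b < 2 ^ Ngf p /\ Nat.testbit b (shr (Ngf p) i) = false /\
    comp 0 (G2f p t) (S i) = wcode (cwd b (Ngf p) (shr (Ngf p) i)).
Proof. intros H1 H2. rewrite G2_c0. simpl. unfold cword. rewrite t_ifz by lia.
  rewrite ltbn_spec. rewrite (proj2 (Nat.ltb_lt _ _) H2). simpl ifz.
  set (N := Ngf p) in *. set (K := shr N i) in *. destruct (dec_i N i) as [E L]. fold K in E, L.
  set (b := i - 2 ^ N * K) in *. replace (bitn i K) with (bitn b K) by (symmetry; transitivity (bitn (2 ^ N * K + b) K); [f_equal; exact E | apply bitn_comp; auto]). rewrite bitn_spec.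
  destruct (Nat.testbit b K) eqn:Eb.
  - exists 0. split. apply pow2_pos. split. apply Nat.bits_0. unfold cwd. rewrite code_cw by apply pow2_pos. lia.
  - exists b. split; auto. split; auto. unfold cwd. rewrite code_cw by auto. lia. Qed.

Lemma cw_eval1' p t K b : 1 <= t -> K < Ngf p -> b < 2 ^ Ngf p -> Nat.testbit b K = false ->
  comp 0 (G2f p t) (S (2 ^ Ngf p * K + b)) = wcode (cwd b (Ngf p) K).
Proof. intros H1 H2 H3 H4. rewrite G2_c0. simpl. unfold cword. rewrite t_ifz by lia.
  rewrite shr_comp by auto. rewrite ltbn_spec, (proj2 (Nat.ltb_lt _ _) H2). simpl ifz.
  rewrite bitn_comp, bitn_spec, H4 by auto. unfold cwd. rewrite code_cw by auto. lia. Qed.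

Lemma cw_eval2 p t i : 1 <= t -> Ngf p <= shr (Ngf p) i ->
  comp 0 (G2f p t) (S i) = 2 ^ Ngf p - 1 + (t - 1 + (i - Ngf p * 2 ^ Ngf p)) + 2 ^ Ngf p * (2 ^ Ngf p - 1).
Proof. intros H1 H2. rewrite G2_c0. simpl. unfold cword. rewrite t_ifz by lia.
  rewrite ltbn_spec. replace (shr (Ngf p) i <? Ngf p) with false by (symmetry; apply Nat.ltb_ge; lia). reflexivity. Qed.

Lemma lw_eval p t i : shr (Ngf p) i < Ngf p ->
  exists b, b < 2 ^ Ngf p /\ comp 1 (G2f p t) (S i) = wcode (cwd b (Ngf p) (shr (Ngf p) i)).
Proof. intros H2. rewrite G2_c1. simpl. unfold lword.
  set (N := Ngf p) in *. set (K := shr N i) in *. destruct (dec_i N i) as [E L]. fold K in E, L.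
  set (b := i - 2 ^ N * K) in *. replace (bitn i K) with (bitn b K) by (symmetry; transitivity (bitn (2 ^ N * K + b) K); [f_equal; exact E | apply bitn_comp; auto]). rewrite bitn_spec.
  destruct (Nat.testbit b K) eqn:Eb.
  - exists b. split; auto. unfold cwd. rewrite code_cw by auto. lia.
  - exists 0. split. apply pow2_pos. unfold cwd. rewrite code_cw by apply pow2_pos. lia. Qed.

Lemma lw_eval' p t K b : K < Ngf p -> b < 2 ^ Ngf p -> Nat.testbit b K = true ->
  comp 1 (G2f p t) (S (2 ^ Ngf p * K + b)) = wcode (cwd b (Ngf p) K).
Proof. intros H2 H3 H4. rewrite G2_c1. simpl. unfold lword.
  rewrite shr_comp by auto. rewrite bitn_comp, bitn_spec, H4 by auto. unfold cwd. rewrite code_cw by auto.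
  replace (2 ^ Ngf p * K + b - 2 ^ Ngf p * K) with b by lia. lia. Qed.

Lemma V_chal p x b K : K < Ngf p -> prefix_of (cwd b (Ngf p) K) x ->
  jsem (Ngf p) x = K /\ x K = Nat.testbit b K.
Proof. intros HK H. unfold cwd in H. rewrite prefix_cw in H. destruct H as (H1 & H2 & H3).
  split. apply jsem_spec; auto. symmetry; apply H1; auto. Qed.

Lemma V1 G1 p x b K : K < Ngf p -> Nat.testbit b K = false -> prefix_of (cwd b (Ngf p) K) x ->
  vsem G1 p x = topo (Ngf p).
Proof. intros HK Hb H. destruct (V_chal p x b K HK H) as [E1 E2]. unfold vsem. rewrite E1, E2, Hb.
  rewrite (proj2 (Nat.ltb_lt _ _) HK). auto. Qed.

Lemma V2 G1 p x b K : K < Ngf p -> Nat.testbit b K = true -> prefix_of (cwd b (Ngf p) K) x ->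
  vsem G1 p x = if excluded_middle_informative (Wset G1 p K (shiftc x (Ngf p + K + 1))) then topo (Ngf p) else 0.
Proof. intros HK Hb H. destruct (V_chal p x b K HK H) as [E1 E2]. unfold vsem. rewrite E1, E2, Hb.
  rewrite (proj2 (Nat.ltb_lt _ _) HK). auto. Qed.

Lemma V3 G1 p x b : b < 2 ^ Ngf p -> prefix_of (bw b (Ngf p) ++ repeat false (Ngf p)) x -> vsem G1 p x = 1 + b.
Proof. intros Hb H. rewrite prefix_fw in H. destruct H as [H1 H2]. unfold vsem.
  rewrite (proj2 (jsem_none _ _) H2), Nat.ltb_irrefl. rewrite (rsem_eq _ _ b); auto. Qed.

Lemma length_cwd b N K : length (cwd b N K) = N + K + 1.
Proof. unfold cwd. rewrite !length_app, length_bw, repeat_length. simpl. lia. Qed.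

Lemma prefix_cwd_x N x J : J < N -> jsem N x = J -> prefix_of (cwd (rsem N x) N J) x.
Proof. intros HJ E. unfold cwd. apply prefix_cw. apply jsem_spec in E; auto. destruct E as [E1 E2].
  split; auto. intros l Hl. apply rsem_bits; auto. Qed.

Lemma G2_den G1 p t x : 1 <= t <= 2 ^ Ngf p + 1 ->
  (rdenot (closure_G2 G1) (G2f p t) x <-> t <= vsem G1 p x).
Proof.
  intros Ht. cbn [rdenot closure_G2]. unfold clopen_den. rewrite cc_eval, lc_eval by auto.
  pose proof (pow2_pos (Ngf p)) as Hp2.
  split.
  - intros [(i & Hi & w & Hw & Hp) | (i & Hi & w & Hw & y & Hy & Hx)].
    + destruct (Nat.lt_ge_cases (shr (Ngf p) i) (Ngf p)) as [HK|HK].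
      * destruct (cw_eval1 p t i ltac:(lia) HK) as (b & Hb & Hbit & Hc). rewrite Hc in Hw.
        apply wcode_inj in Hw. subst w. rewrite (V1 G1 p x b _ HK Hbit Hp). unfold topo; lia.
      * rewrite cw_eval2 in Hw by lia. destruct (dec_i (Ngf p) i) as [E L].
        assert (Hi2 : Ngf p * 2 ^ Ngf p <= i) by nia.
        set (b := t - 1 + (i - Ngf p * 2 ^ Ngf p)) in *.
        assert (Hb : b < 2 ^ Ngf p) by (unfold b; lia).
        rewrite <- code_fw in Hw by auto. apply wcode_inj in Hw. subst w.
        rewrite (V3 G1 p x b Hb Hp). unfold b; lia.
    + destruct (dec_i (Ngf p) i) as [E L].
      assert (HK : shr (Ngf p) i < Ngf p) by nia.
      destruct (lw_eval p t i HK) as (b & Hb & Hc). rewrite Hc in Hw. apply wcode_inj in Hw. subst w.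
      apply app_word_spec in Hx. destruct Hx as [Hpre Hy2]. rewrite length_cwd in Hy2.
      destruct (Nat.testbit b (shr (Ngf p) i)) eqn:Eb.
      * rewrite (V2 G1 p x b _ HK Eb Hpre).
        destruct (excluded_middle_informative _) as [_|n]. unfold topo; lia.
        exfalso. apply n. unfold Wset. rewrite <- G2_c2f with (t := t).
        replace (shiftc x (Ngf p + shr (Ngf p) i + 1)) with y; auto.
        apply functional_extensionality. intros k. rewrite Hy2. reflexivity.
      * rewrite (V1 G1 p x b _ HK Eb Hpre). unfold topo; lia.
  - intros Hv. pose proof (rsem_lt (Ngf p) x) as Hb.
    pose proof (jsem_le (Ngf p) x) as HJ.
    destruct (Nat.lt_ge_cases (jsem (Ngf p) x) (Ngf p)) as [HJ2|HJ2].
    + set (J := jsem (Ngf p) x) in *. set (b := rsem (Ngf p) x) in *.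
      assert (Hpre : prefix_of (cwd b (Ngf p) J) x) by (apply prefix_cwd_x; auto).
      assert (Hbit : Nat.testbit b J = x J) by (apply rsem_bits; auto).
      destruct (x J) eqn:EJ.
      * right. exists (2 ^ Ngf p * J + b). split. nia.
        exists (cwd b (Ngf p) J). split. symmetry. apply lw_eval'; auto.
        exists (shiftc x (Ngf p + J + 1)). split.
        -- rewrite G2_c2f, shr_comp by auto. rewrite (V2 G1 p x b J HJ2 Hbit Hpre) in Hv.
           destruct (excluded_middle_informative _); auto. lia.
        -- apply app_word_spec. split; auto. intros n. rewrite length_cwd. reflexivity.
      * left. exists (2 ^ Ngf p * J + b). split. nia.
        exists (cwd b (Ngf p) J). split. symmetry. apply cw_eval1'; auto; lia. auto.
    + assert (E : jsem (Ngf p) x = Ngf p) by lia.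
      set (b := rsem (Ngf p) x) in *.
      assert (Hvb : vsem G1 p x = 1 + b).
      { unfold vsem. rewrite E, Nat.ltb_irrefl. auto. }
      left. exists (2 ^ Ngf p * Ngf p + (b - (t - 1))). split. lia.
      exists (bw b (Ngf p) ++ repeat false (Ngf p)). split.
      * rewrite cw_eval2. rewrite code_fw by auto. f_equal. f_equal. lia. lia.
        rewrite shr_comp by lia. lia.
      * apply prefix_fw. split. intros l Hl. apply rsem_bits; auto. apply jsem_none; auto. Qed.

Lemma G2_den_all G1 p t x : t <= 2 ^ Ngf p + 2 ->
  (rdenot (closure_G2 G1) (G2f p t) x <-> t <= vsem G1 p x).
Proof. intros Ht. pose proof (vsem_lt G1 p x).
  destruct (Nat.eq_dec t 0) as [E|E].
  - subst. split; intros _; [lia|]. left. exists 0. split. rewrite G2_c0. unfold ccount. simpl. lia.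
    exists []. split. rewrite G2_c0. reflexivity. intros i Hi; simpl in Hi; lia.
  - destruct (Nat.eq_dec t (2 ^ Ngf p + 2)) as [E2|E2].
    + split; [|lia]. cbn [rdenot closure_G2]. unfold clopen_den. rewrite G2_c0, G2_c1. simpl.
      unfold ccount, lcount. rewrite !t_ifz by lia. unfold goutf. rewrite E2, ltbn_spec, Nat.ltb_irrefl.
      simpl. intros [(i & Hi & _) | (i & Hi & _)]; lia.
    + apply G2_den; lia. Qed.

Lemma G2_rnames G1 p t : (forall j, j < Ngf p -> rnames G1 (comp 1 (gamen p j))) ->
  rnames (closure_G2 G1) (G2f p t).
Proof. intros H. cbn [rnames closure_G2]. intros i Hi. rewrite G2_c1 in Hi. simpl in Hi.
  unfold lcount in Hi. rewrite G2_c2f. apply H.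
  destruct (dec_i (Ngf p) i) as [E L]. destruct t. simpl in Hi. lia.
  rewrite t_ifz in Hi by lia. rewrite ltbn_spec in Hi. destruct (_ <? _); nia. Qed.


Definition gpref_ap (a o o' : nat) : Prop := if a =? 0 then o < o' else o' < o.

Lemma ttf_up0 p s o : upper_set (gpref_ap 0) (goutf p) s -> o < goutf p ->
  (Nat.testbit s o = true <-> ttf p 0 s <= o).
Proof. intros Hu Ho. unfold ttf.
  destruct (firstf_spec (fun o => ifz 0 (bitn s o) (1 - bitn s o)) (goutf p)) as (H1 & H2 & H3).
  simpl in *. set (t := firstf _ _) in *. split.
  - intros Hb. destruct (Nat.lt_ge_cases o t); auto. specialize (H2 o H). rewrite bitn_spec, Hb in H2. discriminate.
  - intros Hle. assert (Ht : t < goutf p) by lia. specialize (H3 Ht). rewrite bitn_spec in H3.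
    destruct (Nat.testbit s t) eqn:Et; [|contradiction].
    destruct (Nat.eq_dec t o). subst; auto. apply (Hu t o); auto. unfold gpref_ap; simpl. lia. Qed.

Lemma ttf_up1 p s o : upper_set (gpref_ap 1) (goutf p) s -> o < goutf p ->
  (Nat.testbit s o = true <-> o < ttf p 1 s).
Proof. intros Hu Ho. unfold ttf.
  destruct (firstf_spec (fun o => ifz 1 (bitn s o) (1 - bitn s o)) (goutf p)) as (H1 & H2 & H3).
  simpl in *. set (t := firstf _ _) in *. split.
  - intros Hb. destruct (Nat.lt_ge_cases o t); auto. exfalso.
    assert (Ht : t < goutf p) by lia. specialize (H3 Ht). rewrite bitn_spec in H3.
    destruct (Nat.testbit s t) eqn:Et; [contradiction|].
    destruct (Nat.eq_dec t o). subst. rewrite Hb in Et; discriminate.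
    assert (Nat.testbit s t = true) by (apply (Hu o t); auto; unfold gpref_ap; simpl; lia). congruence.
  - intros Hl. specialize (H2 o Hl). rewrite bitn_spec in H2. destruct (Nat.testbit s o); auto. discriminate. Qed.

Lemma ttf_le p a s : ttf p a s <= goutf p.
Proof. apply firstf_spec. Qed.

Lemma btail_U p a s : btail (Unamef p a s) = G2f p (ttf p a s).
Proof. apply functional_extensionality. intros y. reflexivity. Qed.

Lemma Hf_c0 p z : comp 0 (Hf p) z = 2. Proof. unfold comp, Hf. rewrite uf_pair. reflexivity. Qed.
Lemma Hf_c1 p z : comp 1 (Hf p) z = goutf p. Proof. unfold comp, Hf. rewrite uf_pair. reflexivity. Qed.
Lemma Hf_c2 p z : comp 2 (Hf p) z = turnf p z. Proof. unfold comp, Hf. rewrite uf_pair, us_pair. reflexivity. Qed.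
Lemma Hf_c3 p z : comp 3 (Hf p) z = preff z. Proof. unfold comp, Hf. rewrite uf_pair, us_pair. reflexivity. Qed.
Lemma Hf_c4 p a s : comp (4 + pair_nat a s) (Hf p) = Unamef p a s.
Proof. apply functional_extensionality. intros z. unfold comp, Hf. rewrite uf_pair, us_pair. simpl.
  rewrite Nat.sub_0_r, ?uf_pair, ?us_pair. reflexivity. Qed.
Lemma preff_spec a o o' : preff (pair_nat a (pair_nat o o')) = ifz a (ltbn o o') (ltbn o' o).
Proof. unfold preff. rewrite !uf_pair, !us_pair, ?uf_pair, ?us_pair. reflexivity. Qed.

Definition thegame (G1 : rpc) (p : baire) : game :=
  Game 2 (2 ^ Ngf p + 2) (fun w => turnf p (wcode w)) gpref_ap (vsem G1 p).

Definition inputs_ok (G1 : rpc) (p : baire) := forall j, j < Ngf p -> wl_dom G1 (gamen p j).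

Lemma turn_lt2 G1 p m : inputs_ok G1 p -> turnf p m < 2.
Proof. intros Hok. unfold turnf. rewrite !ltbn_spec.
  destruct (Nat.ltb_spec (jf m (Ngf p)) (Ngf p)) as [HJ|HJ]; simpl ifz.
  - destruct (letter m (jf m (Ngf p))); simpl ifz. lia.
    destruct (wcode_surj (tlk (Ngf p + jf m (Ngf p) + 1) m)) as [w Hw].
    destruct (Hok _ HJ) as [Hd _]. specialize (Hd w). unfold wl_turn, comp in Hd.
    rewrite Hw in Hd. unfold gamen in Hd. rewrite pairf_eq. lia.
  - destruct (_ <? _), (_ <? _); simpl; lia. Qed.

Lemma names_thegame G1 p : inputs_ok G1 p ->
  names_game (union_class (closure_G2 G1) (co_class (closure_G2 G1))) (Hf p) (thegame G1 p).
Proof. intros Hok. unfold names_game. cbn [gpl gout gturn gpref gval thegame].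
  split. apply Hf_c0. split. rewrite Hf_c1. reflexivity.
  split. intros w. apply (turn_lt2 G1). auto.
  split. intros x. apply vsem_lt.
  split. intros w. apply Hf_c2.
  split. intros a o o' Ha _ _. rewrite Hf_c3, preff_spec. unfold gpref_ap.
    destruct a as [|[|a]]; [|simpl|lia]; rewrite ltbn_spec.
    destruct (Nat.ltb_spec o o'); simpl; split; intros; lia.
    destruct (Nat.ltb_spec o' o); simpl; split; intros; lia.
  intros a s Ha Hs Hu. rewrite Hf_c4.
  assert (Hrn : rnames (closure_G2 G1) (G2f p (ttf p a s))).
  { apply G2_rnames. intros j Hj. apply Hok; auto. }
  assert (Ht : ttf p a s <= 2 ^ Ngf p + 2) by apply ttf_le.
  destruct a as [|[|a]]; [| |lia].
  - split. left. split. reflexivity. rewrite btail_U. auto.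
    intros x. cbn [rdenot union_class]. simpl (Unamef p 0 s 0 =? 0). cbv iota.
    rewrite btail_U, G2_den_all by auto. rewrite ttf_up0; [reflexivity | exact Hu | apply vsem_lt].
  - split. right. split. reflexivity. cbn [rnames co_class]. rewrite btail_U. auto.
    intros x. cbn [rdenot union_class co_class]. simpl (Unamef p 1 s 0 =? 0). cbv iota.
    rewrite btail_U, G2_den_all by auto. rewrite ttf_up1; [split; [apply Nat.nle_gt | apply Nat.lt_nge] | exact Hu | apply vsem_lt]. Qed.

Lemma ap_thegame G1 p : ap_game (thegame G1 p).
Proof. unfold ap_game, thegame, gpref_ap; cbn. repeat split; intros; try lia.
Qed.

Lemma hist_map s n : hist s n = map (play s) (seq 0 n).
Proof. induction n. reflexivity. cbn [hist]. rewrite seq_S, map_app. rewrite <- IHn. reflexivity. Qed.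
Lemma hist_len s n : length (hist s n) = n.
Proof. rewrite hist_map, length_map, length_seq. auto. Qed.

Lemma firstn_S_nth (w : word) k : k < length w -> firstn (S k) w = firstn k w ++ [nth k w false].
Proof. revert w; induction k; intros [|a w] H; simpl in *; try lia. auto. f_equal. apply IHk. lia. Qed.

Lemma hist_prefix s w : (forall k, k < length w -> s (firstn k w) = nth k w false) -> hist s (length w) = w.
Proof. intros H. assert (forall k, k <= length w -> hist s k = firstn k w).
  { induction k; intros Hk. auto. cbn [hist]. rewrite IHk by lia. rewrite H by lia. rewrite firstn_S_nth by lia. auto. }
  rewrite H0, firstn_all; auto. Qed.

Lemma prefix_play s n : prefix_of (hist s n) (play s).
Proof. intros i Hi. rewrite hist_len in Hi. rewrite hist_map.
  rewrite nth_indep with (d' := play s 0) by (rewrite length_map, length_seq; auto).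
  rewrite map_nth, seq_nth; auto. Qed.

Lemma hist_of_prefix s w : prefix_of w (play s) -> hist s (length w) = w.
Proof. intros H. apply nth_ext with (d := false) (d' := false). rewrite hist_len; auto.
  intros n Hn. rewrite hist_len in Hn. rewrite H by auto. apply prefix_play. rewrite hist_len; auto. Qed.

Lemma play_shift s w : hist s (length w) = w ->
  shiftc (play s) (length w) = play (fun u => s (w ++ u)).
Proof. intros H. assert (forall n, hist s (length w + n) = w ++ hist (fun u => s (w ++ u)) n).
  { induction n. rewrite Nat.add_0_r, app_nil_r; auto.
    rewrite Nat.add_succ_r. simpl. rewrite IHn, app_assoc. auto. }
  apply functional_extensionality. intros n. unfold shiftc, play. rewrite H0. auto. Qed.

Lemma play_ext s s' : (forall w, s w = s' w) -> play s = play s'.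
Proof. intros H. replace s' with s; auto. apply functional_extensionality; auto. Qed.

Lemma firstn_bw b N k : k <= N -> firstn k (bw b N) = bw b k.
Proof. intros H. unfold bw. rewrite firstn_map. f_equal.
  replace N with (k + (N - k)) by lia. rewrite seq_app, firstn_app, length_seq, Nat.sub_diag. simpl.
  rewrite app_nil_r, firstn_all2; auto. rewrite length_seq; auto. Qed.


Lemma hist_decl s N k : k <= N -> hist s k = bw (rsem N (play s)) k.
Proof. intros H. rewrite hist_map. unfold bw. apply map_ext_in. intros a Ha. apply in_seq in Ha.
  rewrite rsem_bits; auto. lia. Qed.

Lemma firstn_repeat {A} (a : A) k n : firstn k (repeat a n) = repeat a (Nat.min k n).
Proof. revert n; induction k; intros [|n]; simpl; auto. rewrite IHk. auto. Qed.

Lemma firstn_decl b N R k : k <= N -> firstn k (bw b N ++ R) = bw b k.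
Proof. intros H. rewrite firstn_app, length_bw. replace (k - N) with 0 by lia. simpl.
  rewrite app_nil_r. apply firstn_bw; auto. Qed.
Lemma firstn_after b N R k : firstn (N + k) (bw b N ++ R) = bw b N ++ firstn k R.
Proof. rewrite <- (length_bw b N) at 1. apply firstn_app_2. Qed.
Lemma firstn_rf_t j k : k <= j -> firstn k (repeat false j ++ [true]) = repeat false k.
Proof. intros H. rewrite firstn_app, repeat_length. replace (k - j) with 0 by lia. simpl. rewrite app_nil_r.
  replace j with (k + (j - k)) by lia. rewrite repeat_app, firstn_app, repeat_length, Nat.sub_diag. simpl.
  rewrite app_nil_r, firstn_all2; auto. rewrite repeat_length; auto. Qed.
Lemma nth_decl b N R k : k < N -> nth k (bw b N ++ R) false = Nat.testbit b k.
Proof. intros H. rewrite nth_app_l' by (rewrite length_bw; auto). apply nth_bw; auto. Qed.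
Lemma nth_after b N R k : nth (N + k) (bw b N ++ R) false = nth k R false.
Proof. rewrite <- (length_bw b N) at 1. apply app_nth2_plus. Qed.

Lemma cwd_app b N j u : cwd b N j ++ u = bw b N ++ repeat false j ++ true :: u.
Proof. unfold cwd. rewrite <- !app_assoc. reflexivity. Qed.

Lemma nash_dev G1 p s a s' : nash (thegame G1 p) s -> a < 2 ->
  (forall w, turnf p (wcode w) <> a -> s' w = s w) ->
  ~ gpref_ap a (vsem G1 p (play s)) (vsem G1 p (play s')).
Proof. intros Hn Ha H. apply (Hn a Ha s' H). Qed.

(** declarations of play s by player 0 *)
Lemma decl_ok p s k : k < Ngf p -> s (bw (rsem (Ngf p) (play s)) k) = Nat.testbit (rsem (Ngf p) (play s)) k.
Proof. intros H. rewrite <- hist_decl with (N := Ngf p) by lia. rewrite rsem_bits by auto. reflexivity. Qed.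

Definition s_nochal p (s : profile) : profile := fun w => if turnf p (wcode w) =? 1 then false else s w.
Definition s_zero p (s : profile) : profile := fun w => if turnf p (wcode w) =? 0 then false else s w.

Lemma dev_nochal G1 p s : vsem G1 p (play (s_nochal p s)) = 1 + rsem (Ngf p) (play s).
Proof. set (N := Ngf p). set (b := rsem N (play s)). set (W := bw b N ++ repeat false N).
  assert (Hh : hist (s_nochal p s) (length W) = W).
  { apply hist_prefix. intros k Hk. unfold W in Hk. rewrite length_app, length_bw, repeat_length in Hk.
    unfold s_nochal. destruct (Nat.lt_ge_cases k N).
    - unfold W. rewrite firstn_decl, nth_decl by lia. rewrite turn_T1 by (rewrite length_bw; auto).
      simpl. apply decl_ok; auto.
    - replace k with (N + (k - N)) by lia. unfold W. rewrite firstn_after, nth_after.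
      rewrite firstn_repeat, Nat.min_l, nth_repeat by lia. rewrite turn_T2 by (rewrite ?length_bw; auto; lia). auto. }
  apply V3. apply rsem_lt. pose proof (prefix_play (s_nochal p s) (length W)) as Hp. rewrite Hh in Hp. exact Hp. Qed.

Lemma dev_zero G1 p s : 1 <= vsem G1 p (play (s_zero p s)).
Proof. set (x := play (s_zero p s)).
  assert (H0 : forall l, l < Ngf p -> x l = false).
  { intros l Hl. unfold x, play, s_zero at 1. rewrite turn_T1 by (rewrite hist_len; auto). auto. }
  unfold vsem. fold x. destruct (Nat.ltb_spec (jsem (Ngf p) x) (Ngf p)).
  rewrite H0 by auto. unfold topo; lia. lia. Qed.

Lemma o_facts G1 p s : nash (thegame G1 p) s ->
  jsem (Ngf p) (play s) = Ngf p /\ vsem G1 p (play s) = 1 + rsem (Ngf p) (play s).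
Proof. intros Hn.
  assert (H1 := nash_dev G1 p s 1 (s_nochal p s) Hn ltac:(lia)).
  assert (H0 := nash_dev G1 p s 0 (s_zero p s) Hn ltac:(lia)).
  unfold gpref_ap in *; simpl in *.
  rewrite dev_nochal in H1. pose proof (dev_zero G1 p s).
  assert (A1 : vsem G1 p (play s) <= 1 + rsem (Ngf p) (play s)).
  { apply Nat.nlt_ge. apply H1. intros w Hw. unfold s_nochal. destruct (Nat.eqb_spec (turnf p (wcode w)) 1); auto; lia. }
  assert (A0 : vsem G1 p (play (s_zero p s)) <= vsem G1 p (play s)).
  { apply Nat.nlt_ge. apply H0. intros w Hw. unfold s_zero. destruct (Nat.eqb_spec (turnf p (wcode w)) 0); auto; lia. }
  pose proof (rsem_lt (Ngf p) (play s)). set (v0 := vsem G1 p (play (s_zero p s))) in *. clearbody v0.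
  revert A1 A0. unfold vsem.
  destruct (Nat.ltb_spec (jsem (Ngf p) (play s)) (Ngf p)).
  - destruct (play s _); [destruct (excluded_middle_informative _)|]; unfold topo; lia.
  - pose proof (jsem_le (Ngf p) (play s)). intros. split; lia. Qed.

Definition s_chal p (s : profile) j (tau : profile) : profile := fun w =>
  if turnf p (wcode w) =? 1 then
    (if length w <? Ngf p + j then false else if length w =? Ngf p + j then true
     else tau (skipn (Ngf p + j + 1) w))
  else s w.

Lemma skipn_cwd b N j u : skipn (N + j + 1) (cwd b N j ++ u) = u.
Proof. rewrite skipn_app, skipn_all2 by (rewrite length_cwd; lia). rewrite length_cwd, Nat.sub_diag. auto. Qed.

Lemma turn_sub p b j u : b < 2 ^ Ngf p -> j < Ngf p -> Nat.testbit b j = true ->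
  turnf p (wcode (cwd b (Ngf p) j ++ u)) = wl_turn (gamen p j) u.
Proof. intros Hb Hj Ht. rewrite cwd_app, turn_T3 by (rewrite ?length_bw; auto).
  rewrite nth_bw, Ht by auto. reflexivity. Qed.

Lemma dev_chal G1 p s j tau : j < Ngf p -> Nat.testbit (rsem (Ngf p) (play s)) j = true ->
  vsem G1 p (play (s_chal p s j tau)) =
  if excluded_middle_informative (Wset G1 p j (play (fun u =>
      if wl_turn (gamen p j) u =? 1 then tau u else s (cwd (rsem (Ngf p) (play s)) (Ngf p) j ++ u))))
  then topo (Ngf p) else 0.
Proof. intros Hj Hbit. set (N := Ngf p) in *. set (b := rsem N (play s)) in *.
  set (W := cwd b N j). set (s' := s_chal p s j tau).
  assert (Hb : b < 2 ^ N) by apply rsem_lt.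
  assert (Hh : hist s' (length W) = W).
  { apply hist_prefix. intros k Hk. unfold W in Hk. rewrite length_cwd in Hk.
    unfold s', s_chal, W, cwd. destruct (Nat.lt_ge_cases k N).
    - rewrite firstn_decl, nth_decl by lia. rewrite turn_T1 by (rewrite length_bw; auto).
      simpl. apply decl_ok; auto.
    - replace k with (N + (k - N)) by lia. rewrite firstn_after, nth_after.
      destruct (Nat.lt_ge_cases (k - N) j).
      + rewrite firstn_rf_t by lia. rewrite app_nth1 by (rewrite repeat_length; lia). rewrite nth_repeat.
        rewrite turn_T2 by (rewrite ?length_bw; auto; lia). simpl.
        rewrite length_app, length_bw, repeat_length. rewrite (proj2 (Nat.ltb_lt _ _)) by lia. auto.
      + assert (k - N = j) by lia. rewrite H1. rewrite firstn_rf_t by lia.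
        rewrite app_nth2 by (rewrite repeat_length; lia). rewrite repeat_length, Nat.sub_diag.
        rewrite turn_T2 by (rewrite ?length_bw; auto; lia). simpl.
        rewrite length_app, length_bw, repeat_length. rewrite Nat.ltb_irrefl, Nat.eqb_refl. auto. }
  rewrite (V2 G1 p (play s') b j Hj Hbit).
  - pose proof (play_shift s' W Hh) as Hs. assert (Hl : length W = N + j + 1) by apply length_cwd.
    rewrite Hl in Hs. fold N. rewrite Hs.
    assert (E : (fun u : word => s' (W ++ u)) = (fun u : word => if wl_turn (gamen p j) u =? 1 then tau u else s (W ++ u))).
    2:{ rewrite E. reflexivity. }
    apply functional_extensionality. intros u. unfold s', s_chal.
    unfold W. rewrite turn_sub by auto. destruct (wl_turn (gamen p j) u =? 1); auto.
    rewrite length_app, length_cwd. rewrite (proj2 (Nat.ltb_ge _ _)) by lia.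
    rewrite (proj2 (Nat.eqb_neq _ _)) by lia. rewrite skipn_cwd. auto.
  - pose proof (prefix_play s' (length W)) as Hp. rewrite Hh in Hp. exact Hp. Qed.

Definition dturn p j := wl_turn (gamen p j).

Lemma ws_of_bit G1 p s j : nash (thegame G1 p) s -> j < Ngf p ->
  Nat.testbit (rsem (Ngf p) (play s)) j = true ->
  (has_ws (dturn p j) (Wset G1 p j) 0 \/ has_ws (dturn p j) (Wset G1 p j) 1) ->
  has_ws (dturn p j) (Wset G1 p j) 0.
Proof. intros Hn Hj Hbit [H|[tau Ht]]; auto. exfalso.
  destruct (o_facts G1 p s Hn) as [_ Ho].
  assert (Hd := nash_dev G1 p s 1 (s_chal p s j tau) Hn ltac:(lia)).
  unfold gpref_ap in Hd; simpl in Hd. rewrite Ho, dev_chal in Hd by auto.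
  destruct (excluded_middle_informative _) as [Hw|Hw].
  - apply (Ht _ ) in Hw; auto. intros w Hw'. unfold dturn in Hw'. rewrite Hw'. auto.
  - apply Hd. intros w Hw'. unfold s_chal. destruct (Nat.eqb_spec (turnf p (wcode w)) 1); auto; lia. lia. Qed.

Lemma fws_of_bit G1 p s j : nash (thegame G1 p) s -> inputs_ok G1 p -> j < Ngf p ->
  Nat.testbit (rsem (Ngf p) (play s)) j = true ->
  strat_winning (dturn p j) (Wset G1 p j) 0 (fun u => s (cwd (rsem (Ngf p) (play s)) (Ngf p) j ++ u)).
Proof. intros Hn Hok Hj Hbit t' Ht'. simpl.
  destruct (o_facts G1 p s Hn) as [_ Ho].
  assert (Hd := nash_dev G1 p s 1 (s_chal p s j t') Hn ltac:(lia)).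
  unfold gpref_ap in Hd; simpl in Hd. rewrite Ho, dev_chal in Hd by auto.
  assert (E : play (fun u => if wl_turn (gamen p j) u =? 1 then t' u
                   else s (cwd (rsem (Ngf p) (play s)) (Ngf p) j ++ u)) = play t').
  { apply play_ext. intros u. destruct (Nat.eqb_spec (wl_turn (gamen p j) u) 1); auto.
    symmetry. apply Ht'. destruct (Hok j Hj) as [Hd1 _]. specialize (Hd1 u). unfold dturn. lia. }
  rewrite E in Hd. destruct (excluded_middle_informative _) as [Hw|Hw]; auto.
  exfalso. apply Hd. intros w Hw'. unfold s_chal. destruct (Nat.eqb_spec (turnf p (wcode w)) 1); auto; lia. lia. Qed.

Definition omf (G1 : rpc) p j : profile :=
  match excluded_middle_informative (has_ws (dturn p j) (Wset G1 p j) 0) with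
  | left H => proj1_sig (constructive_indefinite_description _ H)
  | right _ => fun _ => false end.
Lemma omf_spec G1 p j : has_ws (dturn p j) (Wset G1 p j) 0 -> strat_winning (dturn p j) (Wset G1 p j) 0 (omf G1 p j).
Proof. intros H. unfold omf. destruct (excluded_middle_informative _) as [H'|H']; [|contradiction].
  exact (proj2_sig (constructive_indefinite_description _ H')). Qed.

Definition jl N (w : word) := firstf (fun k => if nth (N + k) w false then 1 else 0) N.

Definition s_dev3 G1 p (s : profile) K : profile := fun w =>
  if turnf p (wcode w) =? 0 then
    (if length w <? Ngf p then (play s (length w) || (length w =? K))
     else omf G1 p (jl (Ngf p) w) (skipn (Ngf p + jl (Ngf p) w + 1) w))
  else s w.

Lemma sumf_bump g g' N K c : K < N -> (forall l, l < N -> g' l = g l + (if l =? K then c else 0)) ->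
  sumf g' N = sumf g N + c.
Proof. induction N; intros HK H. lia.
  assert (S1 : forall h, sumf h (S N) = sumf h N + h N) by reflexivity. rewrite !S1.
  destruct (Nat.eq_dec K N).
  - subst. rewrite (sumf_ext g' g). rewrite H, Nat.eqb_refl by lia. lia.
    intros l Hl. rewrite H by lia. rewrite (proj2 (Nat.eqb_neq _ _)) by lia. lia.
  - rewrite IHN by (auto; lia). rewrite H by lia. rewrite (proj2 (Nat.eqb_neq _ _)) by lia. lia. Qed.

Lemma jl_cwd b N J u : J < N -> jl N (cwd b N J ++ u) = J.
Proof. intros HJ. unfold jl. apply firstf_unique; try lia.
  - intros k Hk. rewrite cwd_app, nth_after. rewrite app_nth1 by (rewrite repeat_length; lia).
    rewrite nth_repeat. auto.
  - intros _. rewrite cwd_app, nth_after. rewrite app_nth2 by (rewrite repeat_length; lia).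
    rewrite repeat_length, Nat.sub_diag. simpl. lia. Qed.

Lemma no_ws_of_bit G1 p s K : nash (thegame G1 p) s -> inputs_ok G1 p ->
  (forall j, j < Ngf p -> has_ws (dturn p j) (Wset G1 p j) 0 \/ has_ws (dturn p j) (Wset G1 p j) 1) ->
  K < Ngf p -> Nat.testbit (rsem (Ngf p) (play s)) K = false ->
  ~ has_ws (dturn p K) (Wset G1 p K) 0.
Proof. intros Hn Hok Hdet HK Hbit Hws.
  destruct (o_facts G1 p s Hn) as [_ Ho].
  set (N := Ngf p) in *. set (x := play s) in *. set (s3 := s_dev3 G1 p s K).
  set (x3 := play s3).
  assert (Hd := nash_dev G1 p s 0 s3 Hn ltac:(lia)).
  unfold gpref_ap in Hd; simpl in Hd. change (play s) with x in Hd. rewrite Ho in Hd.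
  assert (Hd' : ~ 1 + rsem N x < vsem G1 p x3).
  { apply Hd. intros w Hw. unfold s3, s_dev3. destruct (Nat.eqb_spec (turnf p (wcode w)) 0); auto; lia. }
  clear Hd.
  assert (A : forall l, l < N -> x3 l = x l || (l =? K)).
  { intros l Hl. unfold x3, play at 1, s3, s_dev3 at 1. rewrite turn_T1 by (rewrite hist_len; auto).
    simpl. rewrite hist_len. fold N. rewrite (proj2 (Nat.ltb_lt _ _) Hl). auto. }
  assert (HxK : x K = false) by (rewrite <- rsem_bits with (N := N); auto).
  pose proof (rsem_lt N x) as Hb.
  apply Hd'. unfold vsem. fold N. fold x3.
  destruct (Nat.ltb_spec (jsem N x3) N) as [HJ|HJ].
  2:{ assert (R : rsem N x3 = rsem N x + 2 ^ K).
      { unfold rsem. apply (sumf_bump _ _ N K); auto. intros l Hl. rewrite A by auto. destruct (Nat.eqb_spec l K).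
        subst. rewrite HxK. simpl. lia. rewrite orb_false_r. lia. }
      pose proof (pow2_pos K). lia. }
  set (J := jsem N x3) in *.
  destruct (x3 J) eqn:EJ; [|unfold topo; lia].
  assert (HwsJ : has_ws (dturn p J) (Wset G1 p J) 0).
  { rewrite A in EJ by auto. destruct (x J) eqn:EJ'.
    - apply (ws_of_bit G1 p s J Hn HJ). fold N. fold x. rewrite rsem_bits; auto. apply Hdet; auto.
    - simpl in EJ. apply Nat.eqb_eq in EJ. rewrite EJ. auto. }
  set (b3 := rsem N x3).
  assert (Hb3 : b3 < 2 ^ N) by apply rsem_lt.
  assert (Hbit3 : Nat.testbit b3 J = true) by (unfold b3; rewrite rsem_bits; auto).
  assert (Hpre : prefix_of (cwd b3 N J) x3) by (apply prefix_cwd_x; auto).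
  assert (Hh : hist s3 (length (cwd b3 N J)) = cwd b3 N J) by (apply hist_of_prefix; auto).
  pose proof (play_shift s3 _ Hh) as Hs. rewrite length_cwd in Hs. fold x3 in Hs. rewrite Hs.
  destruct (excluded_middle_informative _) as [_|Hw]. unfold topo; lia.
  exfalso. apply Hw. apply (omf_spec G1 p J HwsJ). intros u Hu.
  unfold s3, s_dev3. rewrite turn_sub by auto. fold (dturn p J). rewrite Hu. simpl.
  rewrite length_app, length_cwd. rewrite (proj2 (Nat.ltb_ge _ _)) by lia.
  rewrite jl_cwd, skipn_cwd by auto. auto. Qed.

Lemma bpair_even p q x : bpair p q (2 * x) = p x.
Proof. unfold bpair. replace (Nat.even (2 * x)) with true by (rewrite Nat.even_mul; reflexivity).
  rewrite Nat.div2_double. reflexivity. Qed.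
Lemma bpair_odd p q x : bpair p q (2 * x + 1) = q x.
Proof. unfold bpair. replace (Nat.even (2 * x + 1)) with false by (rewrite Nat.add_1_r, Nat.even_succ, Nat.odd_mul; reflexivity).
  rewrite Nat.add_1_r, Nat.div2_succ_double. reflexivity. Qed.

Lemma comp0 (r : baire) : comp 0 r = bfst r.
Proof. apply functional_extensionality. intros x. unfold comp, bfst, pair_nat. simpl. f_equal. lia. Qed.
Lemma compS j (r : baire) : comp (S j) r = comp j (bsnd r).
Proof. apply functional_extensionality. intros x. unfold comp, bsnd, pair_nat.
  pose proof (pow2_pos j). rewrite Nat.pow_succ_r by lia. f_equal. nia. Qed.

Lemma power_dom f n r : pdom (power_problem f n) r -> forall j, j < n -> pdom f (comp j r).
Proof. revert r; induction n; intros r H j Hj. lia. destruct H as [H1 H2]. destruct j.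
  rewrite comp0; auto. rewrite compS. apply IHn; auto. lia. Qed.
Lemma power_sol f n r q : (forall j, j < n -> psol f (comp j r) (comp j q)) -> psol (power_problem f n) r q.
Proof. revert r q; induction n; intros r q H; simpl. auto. split.
  rewrite <- !comp0. apply H; lia. apply IHn. intros j Hj. rewrite <- !compS. apply H; lia. Qed.

Lemma gamen_fws p j : j < p 0 -> gamen p j = comp j (btail (bfst p)).
Proof. intros H. apply functional_extensionality. intros x. unfold gamen, gname, comp, btail, bfst.
  rewrite ltbn_spec, (proj2 (Nat.ltb_lt _ _) H). simpl ifz. rewrite pairf_eq. f_equal. lia. Qed.
Lemma gamen_win p j : gamen p (p 0 + j) = comp j (btail (bsnd p)).
Proof. apply functional_extensionality. intros x. unfold gamen, gname, comp, btail, bsnd.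
  rewrite ltbn_spec, (proj2 (Nat.ltb_ge _ _)) by lia. simpl ifz. rewrite pairf_eq.
  replace (p 0 + j - p 0) with j by lia. f_equal. lia. Qed.

Lemma betaf_spec p q s n : names_profile q s -> betaf (bpair p q) n = rsem n (play s).
Proof. intros Hq. induction n. reflexivity.
  change (betaf (bpair p q) (S n)) with (betaf (bpair p q) n + 2 ^ n * bpair p q (2 * (2 ^ n - 1 + betaf (bpair p q) n) + 1)).
  rewrite bpair_odd, IHn. rewrite <- wcode_bw by apply rsem_lt. rewrite Hq.
  rewrite <- hist_decl by lia. change (s (hist s n)) with (play s n).
  assert (R : rsem (S n) (play s) = rsem n (play s) + (if play s n then 2 ^ n else 0)) by reflexivity.
  rewrite R. destruct (play s n); lia. Qed.

Lemma Kf_even o y : Kf o (2 * y) =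
  o (2 * (betaf o (NK o) + 3 * 2 ^ (NK o + uf y) - 1 + 2 ^ (NK o + uf y + 1) * us y) + 1).
Proof. unfold Kf. replace (mod2 (2 * y)) with 0.
  2:{ rewrite mod2_spec. replace (2 * y) with (y * 2) by lia. rewrite Nat.Div0.mod_mul. auto. }
  rewrite ifz_0, Nat.div2_double. auto. Qed.
Lemma Kf_odd o y : Kf o (2 * y + 1) = 1 - bitn (betaf o (NK o)) (o 0 + uf y).
Proof. unfold Kf. replace (mod2 (2 * y + 1)) with 1.
  2:{ rewrite mod2_spec. replace (2 * y + 1) with (1 + y * 2) by lia. rewrite Nat.Div0.mod_add. auto. }
  rewrite ifz_S. rewrite Nat.add_1_r, Nat.div2_succ_double. auto. Qed.

Lemma NK_bpair p q : NK (bpair p q) = Ngf p.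
Proof. unfold NK, Ngf. rewrite <- (bpair_even p q 0), <- (bpair_even p q 1). auto. Qed.

Lemma inputs_of_dom (G1 : rpc) p :
  pdom (prod_problem (star_problem (FindWS G1)) (star_problem (Win G1))) p -> inputs_ok G1 p.
Proof. intros [H1 H2] j Hj. simpl in H1, H2.
  destruct (Nat.lt_ge_cases j (p 0)).
  - rewrite gamen_fws by auto. apply (power_dom _ _ _ H1 j). unfold bfst. simpl. lia.
  - replace j with (p 0 + (j - p 0)) by lia. rewrite gamen_win.
    apply (power_dom _ _ _ H2 (j - p 0)). unfold bsnd, Ngf in *. simpl. lia. Qed.

Theorem lemma27 (G1 : rpc) :
  standing G1 ->
  standing (union_class (closure_G2 G1) (co_class (closure_G2 G1))) ->
  weihrauch_le
    (prod_problem (star_problem (FindWS G1)) (star_problem (Win G1)))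
    (NEap (union_class (closure_G2 G1) (co_class (closure_G2 G1)))).
Proof.
  intros HS1 _. exists (proj1_sig k_Hf), (proj1_sig k_Kf).
  intros G HG p Hp.
  assert (Hok : inputs_ok G1 p) by (apply inputs_of_dom; auto).
  assert (Hdet : forall j, j < Ngf p -> has_ws (dturn p j) (Wset G1 p j) 0 \/ has_ws (dturn p j) (Wset G1 p j) 1).
  { intros j Hj. destruct HS1 as [Hd _]. destruct (Hok j Hj) as [H1 H2]. apply Hd; auto. }
  exists (Hf p). split. intros n. exact (proj2_sig k_Hf p [n]).
  assert (Hdom : pdom (NEap (union_class (closure_G2 G1) (co_class (closure_G2 G1)))) (Hf p)).
  { exists (thegame G1 p). split. apply names_thegame; auto. apply ap_thegame. }
  split. exact Hdom.
  set (q := G (Hf p)). set (o := bpair p q).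
  exists (Kf o). split. intros n. exact (proj2_sig k_Kf o [n]).
  destruct (HG _ Hdom) as (s & Hq & Hns). fold q in Hq.
  assert (Hn : nash (thegame G1 p) s) by (apply Hns; [apply names_thegame; auto | apply ap_thegame]).
  assert (HB : betaf o (NK o) = rsem (Ngf p) (play s)).
  { unfold o. rewrite NK_bpair. apply betaf_spec; auto. }
  assert (HNK : NK o = Ngf p) by (apply NK_bpair).
  destruct Hp as [Hp1 Hp2]. simpl in Hp1, Hp2.
  assert (Hbit : forall j, j < Ngf p -> (Nat.testbit (rsem (Ngf p) (play s)) j = true <-> has_ws (dturn p j) (Wset G1 p j) 0)).
  { intros j Hj. split. intros Hb. apply (ws_of_bit G1 p s j Hn Hj Hb (Hdet j Hj)).
    intros Hw. destruct (Nat.testbit _ j) eqn:E; auto. exfalso. apply (no_ws_of_bit G1 p s j Hn Hok Hdet Hj E Hw). }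
  split; simpl.
  - apply power_sol. intros j Hj. unfold bfst in Hj.
    assert (Hj0 : j < p 0) by (simpl in Hj; exact Hj).
    assert (Hj' : j < Ngf p) by (unfold Ngf; lia).
    rewrite <- gamen_fws by auto.
    exists (fun u => s (cwd (rsem (Ngf p) (play s)) (Ngf p) j ++ u)). split.
    + intros u. unfold comp at 1, bfst. rewrite Kf_even, uf_pair, us_pair, HB, HNK.
      unfold o. rewrite bpair_odd. rewrite <- Hq. f_equal.
      rewrite wcode_app, length_cwd. unfold cwd. rewrite code_cw by apply rsem_lt. lia.
    + exists 0. split. lia. apply fws_of_bit; auto.
      apply Hbit; auto. apply (power_dom _ _ _ Hp1 j) in Hj. rewrite <- gamen_fws in Hj by exact Hj0. apply Hj.
  - apply power_sol. intros j Hj. unfold bsnd in Hj.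
    assert (Hj' : p 0 + j < Ngf p) by (unfold Ngf; simpl in Hj; lia).
    rewrite <- gamen_win. unfold comp at 1, bsnd. unfold Win; cbn [psol]. rewrite Kf_odd, uf_pair, HB.
    replace (o 0) with (p 0) by (unfold o; apply (bpair_even p q 0)).
    rewrite bitn_spec. destruct (Nat.testbit (rsem (Ngf p) (play s)) (p 0 + j)) eqn:E.
    + left. split. auto. apply Hbit; auto.
    + right. split. auto. destruct (Hdet _ Hj') as [H|H]; auto. exfalso.
      apply Hbit in H; auto. congruence. Qed.
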